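(* Let $f:\Sigma\to\mathbb{S}^4_1$ be a non-isotropic conformally immersed marginally trapped surface with non-zero mean curvature vector. Then the following are equivalent: (i) the quartic differential $Q=\langle f_{zz},f_{zz}\rangle dz^4$ is holomorphic; (ii) the quadratic differential $\delta=h(\xi_1-\xi_2)dz^2$ is holomorphic; (iii) $f$ has parallel mean curvature vector, $\nabla^\perp\mathbf H=0$.
   Context: $\mathbb{R}^5_1$ is $\mathbb{R}^5$ with $\langle x,y\rangle=x_0y_0+x_1y_1+x_2y_2+x_3y_3-x_4y_4$ (complex-bilinearly extended), $\mathbb{S}^4_1=\{\langle x,x\rangle=1\}$, future pointing means $\langle X,e_4\rangle<0$. $f$ conformal spacelike immersion with $\langle f_z,f_{\bar z}\rangle=e^{2u}$; positively oriented orthonormal normal frame $\{N_1,N_2\}$: $\langle N_1,N_1\rangle=1,\langle N_2,N_2\rangle=-1,\langle N_1,N_2\rangle=0$, $N_2$ future pointing, orientation of $\nu(f)$; $\xi_1=\langle f_{zz},N_1\rangle$, $\xi_2=-\langle f_{zz},N_2\rangle$ (so $Q=(\xi_1^2-\xi_2^2)dz^4$). $\mathbf H$: $f_{z\bar z}=-e^{2u}f+e^{2u}\mathbf H$; $\nabla^\perp$ normal connection; marginally trapped: $\langle\mathbf H,\mathbf H\rangle=0$, orientation chosen so $\mathbf H=h(N_1+N_2)$. Non-isotropic: $Q$ vanishes nowhere. *)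

(* Defs.v *)
From Stdlib Require Import Reals List ClassicalEpsilon.
Open Scope R_scope.

(** * Real calculus in two variables (local conformal coordinate z = x + i y) *)

Definition D1 (g : R -> R) (x : R) : R :=
  epsilon (inhabits 0) (fun l => derivable_pt_lim g x l).
Definition px (g : R -> R -> R) (x y : R) : R := D1 (fun t => g t y) x.
Definition py (g : R -> R -> R) (x y : R) : R := D1 (fun t => g x t) y.

Fixpoint iterD (w : list bool) (g : R -> R -> R) : R -> R -> R :=
  match w with
  | nil => g
  | b :: w' => if b then px (iterD w' g) else py (iterD w' g)
  end.

Definition open2 (U : R -> R -> Prop) : Prop :=
  forall x y, U x y -> exists e, 0 < e /\
    forall a b, (a - x) ^ 2 + (b - y) ^ 2 < e ^ 2 -> U a b.

Definition cont2 (g : R -> R -> R) (x y : R) : Prop :=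
  forall eps, 0 < eps -> exists d, 0 < d /\
    forall a b, (a - x) ^ 2 + (b - y) ^ 2 < d ^ 2 -> Rabs (g a b - g x y) < eps.

Definition smooth_on (U : R -> R -> Prop) (g : R -> R -> R) : Prop :=
  forall w x y, U x y ->
    (exists l, derivable_pt_lim (fun t => iterD w g t y) x l) /\
    (exists l, derivable_pt_lim (fun t => iterD w g x t) y l) /\
    cont2 (iterD w g) x y.

Record V5 := mkV { c0 : R; c1 : R; c2 : R; c3 : R; c4 : R }.

Definition lor (u v : V5) : R :=
  c0 u * c0 v + c1 u * c1 v + c2 u * c2 v + c3 u * c3 v - c4 u * c4 v.
Definition vzero : V5 := mkV 0 0 0 0 0.
Definition e4 : V5 := mkV 0 0 0 0 1.
Definition vadd (u v : V5) : V5 :=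
  mkV (c0 u + c0 v) (c1 u + c1 v) (c2 u + c2 v) (c3 u + c3 v) (c4 u + c4 v).
Definition vscal (a : R) (u : V5) : V5 :=
  mkV (a * c0 u) (a * c1 u) (a * c2 u) (a * c3 u) (a * c4 u).
Definition vsub (u v : V5) : V5 := vadd u (vscal (-1) v).

Definition vpx (F : R -> R -> V5) (x y : R) : V5 :=
  mkV (px (fun a b => c0 (F a b)) x y) (px (fun a b => c1 (F a b)) x y)
      (px (fun a b => c2 (F a b)) x y) (px (fun a b => c3 (F a b)) x y)
      (px (fun a b => c4 (F a b)) x y).
Definition vpy (F : R -> R -> V5) (x y : R) : V5 :=
  mkV (py (fun a b => c0 (F a b)) x y) (py (fun a b => c1 (F a b)) x y)
      (py (fun a b => c2 (F a b)) x y) (py (fun a b => c3 (F a b)) x y)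
      (py (fun a b => c4 (F a b)) x y).

Definition smoothV_on (U : R -> R -> Prop) (F : R -> R -> V5) : Prop :=
  smooth_on U (fun a b => c0 (F a b)) /\ smooth_on U (fun a b => c1 (F a b)) /\
  smooth_on U (fun a b => c2 (F a b)) /\ smooth_on U (fun a b => c3 (F a b)) /\
  smooth_on U (fun a b => c4 (F a b)).

Definition Cx := (R * R)%type.           (* (re, im) *)
Definition czero : Cx := (0, 0).
Definition csub (a b : Cx) : Cx := (fst a - fst b, snd a - snd b).
Definition cmul (a b : Cx) : Cx :=
  (fst a * fst b - snd a * snd b, fst a * snd b + snd a * fst b).
Definition crscal (r : R) (a : Cx) : Cx := (r * fst a, r * snd a).
Definition copp (a : Cx) : Cx := (- fst a, - snd a).

Definition CV := (V5 * V5)%type.         (* A + i B *)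
Definition cv_of (v : V5) : CV := (v, vzero).
(* complex-bilinear extension of <,> *)
Definition clor (u v : CV) : Cx :=
  (lor (fst u) (fst v) - lor (snd u) (snd v),
   lor (fst u) (snd v) + lor (snd u) (fst v)).

(* d/dz = (d/dx - i d/dy)/2 and d/dzbar = (d/dx + i d/dy)/2 *)
Definition cvdz (G : R -> R -> CV) (x y : R) : CV :=
  let A := fun a b => fst (G a b) in let B := fun a b => snd (G a b) in
  (vscal (1/2) (vadd (vpx A x y) (vpy B x y)),
   vscal (1/2) (vsub (vpx B x y) (vpy A x y))).
Definition cvdzbar (G : R -> R -> CV) (x y : R) : CV :=
  let A := fun a b => fst (G a b) in let B := fun a b => snd (G a b) in
  (vscal (1/2) (vsub (vpx A x y) (vpy B x y)),
   vscal (1/2) (vadd (vpx B x y) (vpy A x y))).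

Definition cdzbar (g : R -> R -> Cx) (x y : R) : Cx :=
  let u := fun a b => fst (g a b) in let v := fun a b => snd (g a b) in
  ((px u x y - py v x y) / 2, (px v x y + py u x y) / 2).

(* holomorphic on U: (real) smooth and d/dzbar g = 0 (holomorphic functions are
   smooth, so this is equivalent to the usual notion) *)
Definition holo_on (U : R -> R -> Prop) (g : R -> R -> Cx) : Prop :=
  smooth_on U (fun a b => fst (g a b)) /\ smooth_on U (fun a b => snd (g a b)) /\
  (forall x y, U x y -> cdzbar g x y = czero).

Definition f_z (f : R -> R -> V5) : R -> R -> CV := cvdz (fun a b => cv_of (f a b)).
Definition f_zbar (f : R -> R -> V5) : R -> R -> CV := cvdzbar (fun a b => cv_of (f a b)).
Definition f_zz (f : R -> R -> V5) : R -> R -> CV := cvdz (f_z f).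
Definition f_zzbar (f : R -> R -> V5) : R -> R -> CV := cvdzbar (f_z f).
(* e^{2u} = <f_z, f_zbar> (a real number) *)
Definition e2u (f : R -> R -> V5) (x y : R) : R := fst (clor (f_z f x y) (f_zbar f x y)).

(* Q = <f_zz, f_zz> dz^4 (coefficient) *)
Definition Qcoef (f : R -> R -> V5) (x y : R) : Cx := clor (f_zz f x y) (f_zz f x y).
Definition xi1 (f N1 : R -> R -> V5) (x y : R) : Cx := clor (f_zz f x y) (cv_of (N1 x y)).
Definition xi2 (f N2 : R -> R -> V5) (x y : R) : Cx :=
  copp (clor (f_zz f x y) (cv_of (N2 x y))).
Definition delta_coef (f N1 N2 : R -> R -> V5) (h : R -> R -> R) (x y : R) : Cx :=
  crscal (h x y) (csub (xi1 f N1 x y) (xi2 f N2 x y)).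

(* normal projection onto span{N1,N2} (<N1,N1> = 1, <N2,N2> = -1) *)
Definition nproj (N1 N2 : V5) (v : V5) : V5 :=
  vsub (vscal (lor v N1) N1) (vscal (lor v N2) N2).

Definition parallel_mean_curv (U : R -> R -> Prop) (N1 N2 H : R -> R -> V5) : Prop :=
  forall x y, U x y ->
    nproj (N1 x y) (N2 x y) (vpx H x y) = vzero /\
    nproj (N1 x y) (N2 x y) (vpy H x y) = vzero.

(* Main.v *)
Require Import Defs.
From Stdlib Require Import Reals Lra Psatz ClassicalEpsilon FunctionalExtensionality PropExtensionality List.
From Coquelicot Require Import Coquelicot.
From mathcomp Require all_boot all_algebra Rstruct.
Import Defs.
Open Scope R_scope.

Lemma D1_eq g x l : derivable_pt_lim g x l -> D1 g x = l.
Proof.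
  intros Hl. unfold D1.
  pose proof (epsilon_spec (inhabits 0) (fun l => derivable_pt_lim g x l) (ex_intro _ l Hl)) as He.
  eapply uniqueness_limite; eauto.
Qed.

Lemma dpl_loc g k x e l : 0 < e -> (forall t, Rabs (t - x) < e -> g t = k t) ->
  derivable_pt_lim g x l -> derivable_pt_lim k x l.
Proof.
  intros He Hgk Hd eps Heps. destruct (Hd eps Heps) as [d Hd'].
  assert (Hm : 0 < Rmin d e) by (apply Rmin_pos; [apply cond_pos | lra]).
  exists (mkposreal _ Hm). intros hh Hh0 Hh. simpl in Hh.
  rewrite <- !Hgk.
  - apply Hd'; auto. apply Rlt_le_trans with (1 := Hh). apply Rmin_l.
  - rewrite Rminus_diag, Rabs_R0; lra.
  - replace (x + hh - x) with hh by ring. apply Rlt_le_trans with (1 := Hh). apply Rmin_r.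
Qed.

Lemma D1_loc g k x e : 0 < e -> (forall t, Rabs (t - x) < e -> g t = k t) -> D1 g x = D1 k x.
Proof.
  intros He Hgk. unfold D1. f_equal. apply functional_extensionality. intro l.
  apply propositional_extensionality. split; intro Hd.
  - eapply dpl_loc; eauto.
  - eapply dpl_loc with (g := k); eauto. intros t Ht; symmetry; auto.
Qed.

Lemma locR x (P:R->Prop) e : 0<e -> (forall t, Rabs (t-x) < e -> P t) -> locally x P.
Proof. intros He H. exists (mkposreal e He). intros t Ht. apply H. exact Ht. Qed.

Lemma cont2_c2d g x y : cont2 g x y <-> continuity_2d_pt g x y.
Proof.
  split.
  - intros Hc eps. destruct (Hc eps (cond_pos eps)) as [d [Hd Hd']].
    assert (Hd2 : 0 < d / 2) by lra.
    exists (mkposreal _ Hd2). intros u v Hu Hv. simpl in *. apply Hd'.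
    assert (Hu2 : (u - x)^2 < (d/2)^2).
    { rewrite <- pow2_abs. pose proof (Rabs_pos (u - x)). nra. }
    assert (Hv2 : (v - y)^2 < (d/2)^2).
    { rewrite <- pow2_abs. pose proof (Rabs_pos (v - y)). nra. }
    nra.
  - intros Hc eps Heps. destruct (Hc (mkposreal eps Heps)) as [d Hd].
    exists d. split; [apply cond_pos|]. intros a b Hab. apply Hd.
    + pose proof (pow2_abs (a - x)). pose proof (pow2_ge_0 (b - y)). pose proof (cond_pos d).
      pose proof (Rabs_pos (a - x)). nra.
    + pose proof (pow2_abs (b - y)). pose proof (pow2_ge_0 (a - x)). pose proof (cond_pos d).
      pose proof (Rabs_pos (b - y)). nra.
Qed.

Section SFsec.
Variable U : R -> R -> Prop.
Hypothesis HU : open2 U.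

Lemma openUx x y : U x y -> exists e, 0 < e /\ forall t, Rabs (t - x) < e -> U t y.
Proof.
  intros Hu. destruct (HU x y Hu) as [e [He He']]. exists e; split; auto.
  intros t Ht. apply He'. pose proof (pow2_abs (t - x)). pose proof (Rabs_pos (t - x)).
  replace ((y - y)^2) with 0 by ring. nra.
Qed.

Lemma openUy x y : U x y -> exists e, 0 < e /\ forall t, Rabs (t - y) < e -> U x t.
Proof.
  intros Hu. destruct (HU x y Hu) as [e [He He']]. exists e; split; auto.
  intros t Ht. apply He'. pose proof (pow2_abs (t - y)). pose proof (Rabs_pos (t - y)).
  replace ((x - x)^2) with 0 by ring. nra.
Qed.

Lemma openU2 x y : U x y -> exists e, 0 < e /\ forall a b, Rabs (a - x) < e -> Rabs (b - y) < e -> U a b.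
Proof.
  intros Hu. destruct (HU x y Hu) as [e [He He']]. exists (e/2); split; [lra|].
  intros a b Ha Hb. apply He'.
  pose proof (pow2_abs (a - x)). pose proof (Rabs_pos (a - x)).
  pose proof (pow2_abs (b - y)). pose proof (Rabs_pos (b - y)). nra.
Qed.

Definition okp (g : R -> R -> R) x y :=
  (exists l, derivable_pt_lim (fun t => g t y) x l) /\
  (exists l, derivable_pt_lim (fun t => g x t) y l) /\ continuity_2d_pt g x y.

Lemma okp_ext g k x y : U x y -> (forall a b, U a b -> g a b = k a b) -> okp g x y -> okp k x y.
Proof.
  intros Hu Hgk [[l1 H1] [[l2 H2] H3]]. split; [|split].
  - exists l1. destruct (openUx x y Hu) as [e [He He']].
    eapply dpl_loc with (g := fun t => g t y); eauto.
  - exists l2. destruct (openUy x y Hu) as [e [He He']].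
    eapply dpl_loc with (g := fun t => g x t); eauto.
  - intros eps. destruct (H3 eps) as [d Hd]. destruct (openU2 x y Hu) as [e [He He']].
    assert (Hm : 0 < Rmin d e) by (apply Rmin_pos; [apply cond_pos | lra]).
    exists (mkposreal _ Hm). simpl. intros u v Hu' Hv'.
    assert (Hu1 : Rabs (u - x) < d) by (apply Rlt_le_trans with (1 := Hu'); apply Rmin_l).
    assert (Hv1 : Rabs (v - y) < d) by (apply Rlt_le_trans with (1 := Hv'); apply Rmin_l).
    assert (Hu2 : Rabs (u - x) < e) by (apply Rlt_le_trans with (1 := Hu'); apply Rmin_r).
    assert (Hv2 : Rabs (v - y) < e) by (apply Rlt_le_trans with (1 := Hv'); apply Rmin_r).
    rewrite <- (Hgk u v), <- (Hgk x y); auto.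
Qed.

Lemma px_ext g k x y : (forall a b, U a b -> g a b = k a b) -> U x y -> px g x y = px k x y.
Proof.
  intros Hgk Hu. unfold px. destruct (openUx x y Hu) as [e [He He']].
  apply D1_loc with e; auto.
Qed.

Lemma py_ext g k x y : (forall a b, U a b -> g a b = k a b) -> U x y -> py g x y = py k x y.
Proof.
  intros Hgk Hu. unfold py. destruct (openUy x y Hu) as [e [He He']].
  apply D1_loc with e; auto.
Qed.

Lemma px_spec g x y : okp g x y -> derivable_pt_lim (fun t => g t y) x (px g x y).
Proof. intros [[l Hl] _]. unfold px. rewrite (D1_eq _ _ _ Hl). exact Hl. Qed.
Lemma py_spec g x y : okp g x y -> derivable_pt_lim (fun t => g x t) y (py g x y).
Proof. intros [_ [[l Hl] _]]. unfold py. rewrite (D1_eq _ _ _ Hl). exact Hl. Qed.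

Lemma px_const c x y : px (fun _ _ => c) x y = 0.
Proof. unfold px. apply D1_eq. apply derivable_pt_lim_const. Qed.
Lemma py_const c x y : py (fun _ _ => c) x y = 0.
Proof. unfold py. apply D1_eq. apply derivable_pt_lim_const. Qed.

Lemma px_add g k x y : okp g x y -> okp k x y ->
  px (fun a b => g a b + k a b) x y = px g x y + px k x y.
Proof.
  intros Hg Hk. unfold px at 1. apply D1_eq.
  apply (derivable_pt_lim_plus (fun t => g t y) (fun t => k t y)); apply px_spec; auto.
Qed.
Lemma py_add g k x y : okp g x y -> okp k x y ->
  py (fun a b => g a b + k a b) x y = py g x y + py k x y.
Proof.
  intros Hg Hk. unfold py at 1. apply D1_eq.
  apply (derivable_pt_lim_plus (fun t => g x t) (fun t => k x t)); apply py_spec; auto.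
Qed.
Lemma px_mul g k x y : okp g x y -> okp k x y ->
  px (fun a b => g a b * k a b) x y = px g x y * k x y + g x y * px k x y.
Proof.
  intros Hg Hk. unfold px at 1. apply D1_eq.
  apply (derivable_pt_lim_mult (fun t => g t y) (fun t => k t y)); apply px_spec; auto.
Qed.
Lemma py_mul g k x y : okp g x y -> okp k x y ->
  py (fun a b => g a b * k a b) x y = py g x y * k x y + g x y * py k x y.
Proof.
  intros Hg Hk. unfold py at 1. apply D1_eq.
  apply (derivable_pt_lim_mult (fun t => g x t) (fun t => k x t)); apply py_spec; auto.
Qed.

Lemma dpl_inv (g : R -> R) x l : derivable_pt_lim g x l -> g x <> 0 ->
  derivable_pt_lim (fun t => / g t) x (- l * (/ g x * / g x)).
Proof.
  intros Hd Hn. pose proof (derivable_pt_lim_div (fun _ => 1) g x 0 l (derivable_pt_lim_const 1 x) Hd Hn) as H.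
  replace (- l * (/ g x * / g x)) with ((0 * g x - l * 1) / (g x)²) by (unfold Rsqr; field; auto).
  replace (fun t => / g t) with ((fun _ : R => 1) / g)%F; auto.
  apply functional_extensionality; intro t; unfold div_fct, Rdiv; ring.
Qed.

Lemma px_inv g x y : okp g x y -> g x y <> 0 ->
  px (fun a b => / g a b) x y = - px g x y * (/ g x y * / g x y).
Proof. intros Hg Hn. unfold px at 1. apply D1_eq. apply (dpl_inv (fun t => g t y)); auto. apply px_spec; auto. Qed.
Lemma py_inv g x y : okp g x y -> g x y <> 0 ->
  py (fun a b => / g a b) x y = - py g x y * (/ g x y * / g x y).
Proof. intros Hg Hn. unfold py at 1. apply D1_eq. apply (dpl_inv (fun t => g x t)); auto. apply py_spec; auto. Qed.

Lemma iterD_app w b g : iterD (w ++ b :: nil) g = iterD w (if b then px g else py g).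
Proof. induction w as [|a w IH]; simpl; [reflexivity| rewrite IH; reflexivity]. Qed.

Lemma smooth_px g : smooth_on U g -> smooth_on U (px g).
Proof. intros Hs w x y Hu. pose proof (Hs (w ++ true :: nil) x y Hu) as H. rewrite iterD_app in H. exact H. Qed.
Lemma smooth_py g : smooth_on U g -> smooth_on U (py g).
Proof. intros Hs w x y Hu. pose proof (Hs (w ++ false :: nil) x y Hu) as H. rewrite iterD_app in H. exact H. Qed.

Inductive SF : (R -> R -> R) -> Prop :=
 | SFsm g : smooth_on U g -> SF g
 | SFc c : SF (fun _ _ => c)
 | SFadd g k : SF g -> SF k -> SF (fun a b => g a b + k a b)
 | SFmul g k : SF g -> SF k -> SF (fun a b => g a b * k a b)
 | SFinv g : SF g -> (forall x y, U x y -> g x y <> 0) -> SF (fun a b => / g a b)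
 | SFext g k : SF g -> (forall x y, U x y -> g x y = k x y) -> SF k.

Lemma SF_ok g : SF g -> forall x y, U x y -> okp g x y.
Proof.
  induction 1 as [g Hs|c|g k Hg IHg Hk IHk|g k Hg IHg Hk IHk|g Hg IHg Hn|g k Hg IHg Hgk]; intros x y Hu.
  - destruct (Hs nil x y Hu) as [H1 [H2 H3]]. split; [exact H1|split; [exact H2|]].
    apply cont2_c2d; exact H3.
  - split; [exists 0; apply derivable_pt_lim_const|split; [exists 0; apply derivable_pt_lim_const|]].
    apply continuity_2d_pt_const.
  - destruct (IHg x y Hu) as [[l1 A1] [[l2 A2] A3]]. destruct (IHk x y Hu) as [[m1 B1] [[m2 B2] B3]].
    split; [|split].
    + exists (l1 + m1). apply (derivable_pt_lim_plus (fun t => g t y) (fun t => k t y)); auto.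
    + exists (l2 + m2). apply (derivable_pt_lim_plus (fun t => g x t) (fun t => k x t)); auto.
    + apply continuity_2d_pt_plus; auto.
  - destruct (IHg x y Hu) as [[l1 A1] [[l2 A2] A3]]. destruct (IHk x y Hu) as [[m1 B1] [[m2 B2] B3]].
    split; [|split].
    + eexists. apply (derivable_pt_lim_mult (fun t => g t y) (fun t => k t y)); eauto.
    + eexists. apply (derivable_pt_lim_mult (fun t => g x t) (fun t => k x t)); eauto.
    + apply continuity_2d_pt_mult; auto.
  - destruct (IHg x y Hu) as [[l1 A1] [[l2 A2] A3]]. split; [|split].
    + eexists. apply (dpl_inv (fun t => g t y)); eauto.
    + eexists. apply (dpl_inv (fun t => g x t)); eauto.
    + apply (continuity_1d_2d_pt_comp (fun r => / r)); auto.
      apply (continuity_pt_inv (fun r => r)); [apply continuity_pt_id| apply Hn; auto].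
  - apply okp_ext with g; auto.
Qed.

Lemma SF_px g : SF g -> SF (px g).
Proof.
  intros HS. induction HS as [g Hs|c|g k Hg IHg Hk IHk|g k Hg IHg Hk IHk|g Hg IHg Hn|g k Hg IHg Hgk].
  - apply SFsm, smooth_px, Hs.
  - apply SFext with (fun _ _ => 0); [apply SFc|]. intros; rewrite px_const; auto.
  - apply SFext with (fun a b => px g a b + px k a b); [apply SFadd; auto|].
    intros x y Hu; rewrite px_add; auto; apply SF_ok; auto.
  - apply SFext with (fun a b => px g a b * k a b + g a b * px k a b); [apply SFadd; apply SFmul; auto|].
    intros x y Hu; rewrite px_mul; auto; apply SF_ok; auto.
  - apply SFext with (fun a b => (-1 * px g a b) * (/ g a b * / g a b)).
    + apply SFmul; [apply SFmul; [apply SFc|auto]|apply SFmul; apply SFinv; auto].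
    + intros x y Hu; rewrite px_inv; auto; [ring|apply SF_ok; auto].
  - apply SFext with (px g); auto. intros x y Hu. apply px_ext; auto.
Qed.

Lemma SF_py g : SF g -> SF (py g).
Proof.
  intros HS. induction HS as [g Hs|c|g k Hg IHg Hk IHk|g k Hg IHg Hk IHk|g Hg IHg Hn|g k Hg IHg Hgk].
  - apply SFsm, smooth_py, Hs.
  - apply SFext with (fun _ _ => 0); [apply SFc|]. intros; rewrite py_const; auto.
  - apply SFext with (fun a b => py g a b + py k a b); [apply SFadd; auto|].
    intros x y Hu; rewrite py_add; auto; apply SF_ok; auto.
  - apply SFext with (fun a b => py g a b * k a b + g a b * py k a b); [apply SFadd; apply SFmul; auto|].
    intros x y Hu; rewrite py_mul; auto; apply SF_ok; auto.
  - apply SFext with (fun a b => (-1 * py g a b) * (/ g a b * / g a b)).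
    + apply SFmul; [apply SFmul; [apply SFc|auto]|apply SFmul; apply SFinv; auto].
    + intros x y Hu; rewrite py_inv; auto; [ring|apply SF_ok; auto].
  - apply SFext with (py g); auto. intros x y Hu. apply py_ext; auto.
Qed.

Lemma SF_iter w g : SF g -> SF (iterD w g).
Proof. induction w as [|b w IH]; simpl; intros Hg; auto. destruct b; [apply SF_px|apply SF_py]; auto. Qed.

Lemma SF_smooth g : SF g -> smooth_on U g.
Proof.
  intros Hg w x y Hu. destruct (SF_ok _ (SF_iter w g Hg) x y Hu) as [H1 [H2 H3]].
  split; [exact H1|split; [exact H2|apply cont2_c2d; exact H3]].
Qed.

Lemma Dx_eq g a b : okp g a b -> Derive (fun t => g t b) a = px g a b.
Proof. intros H. apply is_derive_unique. apply is_derive_Reals. apply px_spec; auto. Qed.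
Lemma Dy_eq g a b : okp g a b -> Derive (fun t => g a t) b = py g a b.
Proof. intros H. apply is_derive_unique. apply is_derive_Reals. apply py_spec; auto. Qed.
Lemma exdx g a b : okp g a b -> ex_derive (fun t => g t b) a.
Proof. intros H. exists (px g a b). apply is_derive_Reals. apply px_spec; auto. Qed.
Lemma exdy g a b : okp g a b -> ex_derive (fun t => g a t) b.
Proof. intros H. exists (py g a b). apply is_derive_Reals. apply py_spec; auto. Qed.

Lemma c2d_loc k k' x y d : 0 < d -> continuity_2d_pt k x y ->
  (forall u v, Rabs (u - x) < d -> Rabs (v - y) < d -> k' u v = k u v) -> continuity_2d_pt k' x y.
Proof.
  intros Hd Hc Heq eps. destruct (Hc eps) as [d' Hd'].
  assert (Hm : 0 < Rmin d d') by (apply Rmin_pos; [lra|apply cond_pos]).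
  exists (mkposreal _ Hm). simpl. intros u v Hu Hv.
  assert (Hu1 : Rabs (u - x) < d) by (apply Rlt_le_trans with (1 := Hu); apply Rmin_l).
  assert (Hv1 : Rabs (v - y) < d) by (apply Rlt_le_trans with (1 := Hv); apply Rmin_l).
  assert (Hu2 : Rabs (u - x) < d') by (apply Rlt_le_trans with (1 := Hu); apply Rmin_r).
  assert (Hv2 : Rabs (v - y) < d') by (apply Rlt_le_trans with (1 := Hv); apply Rmin_r).
  rewrite (Heq u v), (Heq x y); auto; rewrite Rminus_diag, Rabs_R0; lra.
Qed.

Lemma SF_schwarz g x y : SF g -> U x y -> px (py g) x y = py (px g) x y.
Proof.
  intros Hg Hu. destruct (openU2 x y Hu) as [e [He He']].
  assert (He2 : 0 < e / 2) by lra.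
  assert (Hin : forall u v, Rabs (u - x) < e/2 -> Rabs (v - y) < e/2 -> U u v).
  { intros u v H1 H2; apply He'; lra. }
  assert (Hz1 : forall u v z, Rabs (u - x) < e/2 -> Rabs (v - y) < e/2 -> Rabs (z - u) < e/2 -> U z v).
  { intros u v z H1 H2 H3; apply He'; [|lra].
    replace (z - x) with ((z - u) + (u - x)) by ring. eapply Rle_lt_trans; [apply Rabs_triang|lra]. }
  assert (Hz2 : forall u v z, Rabs (u - x) < e/2 -> Rabs (v - y) < e/2 -> Rabs (z - v) < e/2 -> U u z).
  { intros u v z H1 H2 H3; apply He'; [lra|].
    replace (z - y) with ((z - v) + (v - y)) by ring. eapply Rle_lt_trans; [apply Rabs_triang|lra]. }
  assert (Hpy := SF_py g Hg). assert (Hpx := SF_px g Hg).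
  assert (E1 : forall u v, Rabs (u - x) < e/2 -> Rabs (v - y) < e/2 ->
     Derive (fun z => Derive (fun t => g z t) v) u = px (py g) u v).
  { intros u v H1 H2. rewrite <- Dx_eq; [|apply SF_ok; auto].
    apply Derive_ext_loc. apply locR with (e/2); auto. intros z Hz. apply Dy_eq, SF_ok; eauto. }
  assert (E2 : forall u v, Rabs (u - x) < e/2 -> Rabs (v - y) < e/2 ->
     Derive (fun z => Derive (fun t => g t z) u) v = py (px g) u v).
  { intros u v H1 H2. rewrite <- Dy_eq; [|apply SF_ok; auto].
    apply Derive_ext_loc. apply locR with (e/2); auto. intros z Hz. apply Dx_eq, SF_ok; eauto. }
  assert (Hx0 : Rabs (x - x) < e/2) by (rewrite Rminus_diag, Rabs_R0; lra).
  assert (Hy0 : Rabs (y - y) < e/2) by (rewrite Rminus_diag, Rabs_R0; lra).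
  rewrite <- E1, <- E2; auto.
  apply Schwarz.
  - exists (mkposreal _ He2). simpl. intros u v H1 H2. split; [|split; [|split]].
    + apply exdx, SF_ok; auto.
    + apply exdy, SF_ok; auto.
    + apply ex_derive_ext_loc with (fun z => py g z v).
      * apply locR with (e/2); auto. intros z Hz. symmetry. apply Dy_eq, SF_ok; eauto.
      * apply exdx, SF_ok; auto.
    + apply ex_derive_ext_loc with (fun z => px g u z).
      * apply locR with (e/2); auto. intros z Hz. symmetry. apply Dx_eq, SF_ok; eauto.
      * apply exdy, SF_ok; auto.
  - apply c2d_loc with (px (py g)) (e/2); auto.
    + destruct (SF_ok _ (SF_px _ Hpy) x y Hu) as [_ [_ Hc]]; exact Hc.
  - apply c2d_loc with (py (px g)) (e/2); auto.
    + destruct (SF_ok _ (SF_py _ Hpx) x y Hu) as [_ [_ Hc]]; exact Hc.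
Qed.

End SFsec.
Module Basis.
Import all_boot all_algebra Rstruct.
Import GRing.Theory.
Import Defs.
Local Open Scope ring_scope.

Definition vcol (v : V5) : 'cV[R]_5 :=
  \col_(j < 5) (match nat_of_ord j with 0 => c0 v | 1 => c1 v | 2 => c2 v | 3 => c3 v | _ => c4 v end).

Lemma RplusE (x y : R) : Rplus x y = (x + y)%R. Proof. by []. Qed.
Lemma RmultE (x y : R) : Rmult x y = (x * y)%R. Proof. by []. Qed.
Lemma RminusE (x y : R) : Rminus x y = (x - y)%R. Proof. by []. Qed.
Lemma RoppE (x : R) : Ropp x = (- x)%R. Proof. by []. Qed.

Definition eta5 : 'M[R]_5 := diag_mx (\row_(j<5) if nat_of_ord j == 4%N then (-1)%R else 1%R).

Lemma lor_mx (a b : V5) : lor a b = \sum_(k < 5) vcol a k ord0 * eta5 k k * vcol b k ord0.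
Proof.
rewrite !big_ord_recl !big_ord0 /eta5 !mxE /=.
rewrite /lor !mulr1n; cbn. ring.
Qed.

Lemma basis5 (e0 e1 e2 e3 e4 w : V5) (d0 d1 d2 d3 d4 : R) :
  d0 <> 0%R -> d1 <> 0%R -> d2 <> 0%R -> d3 <> 0%R -> d4 <> 0%R ->
  lor e0 e0 = d0 -> lor e1 e1 = d1 -> lor e2 e2 = d2 -> lor e3 e3 = d3 -> lor e4 e4 = d4 ->
  lor e0 e1 = 0%R -> lor e0 e2 = 0%R -> lor e0 e3 = 0%R -> lor e0 e4 = 0%R ->
  lor e1 e2 = 0%R -> lor e1 e3 = 0%R -> lor e1 e4 = 0%R ->
  lor e2 e3 = 0%R -> lor e2 e4 = 0%R -> lor e3 e4 = 0%R ->
  lor w e0 = 0%R -> lor w e1 = 0%R -> lor w e2 = 0%R -> lor w e3 = 0%R -> lor w e4 = 0%R ->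
  w = vzero.
Proof.
move=> nz0 nz1 nz2 nz3 nz4 g00 g11 g22 g33 g44 g01 g02 g03 g04 g12 g13 g14 g23 g24 g34 w0 w1 w2 w3 w4.
pose sel (i : 'I_5) := match nat_of_ord i with 0 => e0 | 1 => e1 | 2 => e2 | 3 => e3 | _ => e4 end.
pose dd (i : 'I_5) := match nat_of_ord i with 0 => d0 | 1 => d1 | 2 => d2 | 3 => d3 | _ => d4 end.
pose E : 'M[R]_5 := \matrix_(i, j) vcol (sel i) j ord0.
have lorC : forall a b, lor a b = lor b a by move=> a b; rewrite /lor; ring.
have G : E *m eta5 *m E^T = diag_mx (\row_i dd i).
  apply/matrixP => i j; rewrite !mxE.
  have -> : \sum_j0 (E *m eta5) i j0 * E^T j0 j = lor (sel i) (sel j).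
    rewrite lor_mx; apply: eq_bigr => k _.
    rewrite !mxE (bigD1 k) //= big1 ?addr0 ?mxE //.
    by move=> k' nk; rewrite /eta5 !mxE (negbTE nk) mulr0n mulr0.
  have eqo : forall (a b : 'I_5), (a == b) = (nat_of_ord a == nat_of_ord b)%N by [].
  rewrite eqo; case: i j => [i Hi] [j Hj]; rewrite /sel /dd /=.
  case: i Hi => [|[|[|[|[|i]]]]] Hi; try (exfalso; by []);
  case: j Hj => [|[|[|[|[|j]]]]] Hj; try (exfalso; by []);
  rewrite ?mulr1n ?mulr0n //; by rewrite lorC.
pose Dinv : 'M[R]_5 := diag_mx (\row_i (dd i)^-1).
have R1 : E *m (eta5 *m E^T *m Dinv) = 1%:M.
  rewrite !mulmxA G /Dinv mulmx_diag; apply/matrixP => i j; rewrite !mxE.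
  case: i => [i Hi]; rewrite /dd /=.
  case: i Hi => [|[|[|[|[|i]]]]] Hi; try (exfalso; by []); rewrite divff //; by apply/eqP.
have L := mulmx1C R1.
have Ew : E *m (eta5 *m vcol w) = 0.
  apply/matrixP => i j; rewrite !mxE.
  have -> : \sum_j0 E i j0 * (eta5 *m vcol w) j0 j = lor (sel i) w.
    rewrite lor_mx; apply: eq_bigr => k _.
    rewrite !mxE (bigD1 k) //= big1 ?addr0 ?mxE.
      by rewrite eqxx mulr1n mulrA.
    move=> k' nk; have nk' : (k == k') = false by rewrite eq_sym; exact: negbTE nk.
    by rewrite /eta5 !mxE nk' mulr0n mul0r.
  case: i => [i Hi]; rewrite /sel /=.
  case: i Hi => [|[|[|[|[|i]]]]] Hi; try (exfalso; by []); by rewrite lorC.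
have Z : eta5 *m vcol w = 0.
  by have := congr1 (mulmx (eta5 *m E^T *m Dinv)) Ew; rewrite mulmxA L mul1mx mulmx0.
have EE : eta5 *m eta5 = 1%:M.
  rewrite /eta5 mulmx_diag; apply/matrixP => i j; rewrite !mxE.
  case: i => [i Hi] /=.
  case: i Hi => [|[|[|[|[|i]]]]] Hi; try (exfalso; by []); rewrite /= ?mulr1 //; by rewrite mulrNN mulr1.
have Z2 : vcol w = 0 by have := congr1 (mulmx eta5) Z; rewrite mulmxA EE mul1mx mulmx0.
have C := fun k => congr1 (fun M : 'cV[R]_5 => M k ord0) Z2.
have C0 := C (@Ordinal 5 0 isT); have C1 := C (@Ordinal 5 1 isT); have C2 := C (@Ordinal 5 2 isT);
have C3 := C (@Ordinal 5 3 isT); have C4 := C (@Ordinal 5 4 isT).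
rewrite /= !mxE /= in C0 C1 C2 C3 C4.
by case: w {w0 w1 w2 w3 w4 Ew Z Z2 C} C0 C1 C2 C3 C4 => /= ? ? ? ? ? -> -> -> -> ->.
Qed.
End Basis.

Import Defs.
Open Scope R_scope.
Arguments px : simpl never.
Arguments py : simpl never.

Lemma V5eq u v : c0 u = c0 v -> c1 u = c1 v -> c2 u = c2 v -> c3 u = c3 v -> c4 u = c4 v -> u = v.
Proof. destruct u, v; simpl; intros; subst; reflexivity. Qed.

Ltac sfc := repeat first [apply SFadd | apply SFmul | apply SFc | assumption].
Ltac okall := match goal with HU : open2 ?U |- okp _ _ _ => eapply (SF_ok U HU); [sfc|eassumption] end.

Section Vec.
Variable U : R -> R -> Prop.
Hypothesis HU : open2 U.

Definition SFV (F : R -> R -> V5) :=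
  SF U (fun a b => c0 (F a b)) /\ SF U (fun a b => c1 (F a b)) /\ SF U (fun a b => c2 (F a b)) /\
  SF U (fun a b => c3 (F a b)) /\ SF U (fun a b => c4 (F a b)).

Lemma SFsub g k : SF U g -> SF U k -> SF U (fun a b => g a b - k a b).
Proof. intros. apply SFext with (fun a b => g a b + (-1) * k a b); [apply SFadd; [|apply SFmul; [apply SFc|]]; auto| intros; ring]. Qed.
Lemma SFopp g : SF U g -> SF U (fun a b => - g a b).
Proof. intros. apply SFext with (fun a b => (-1) * g a b); [apply SFmul; [apply SFc|]; auto| intros; ring]. Qed.

Lemma SFV_vpx F : SFV F -> SFV (vpx F).
Proof. intros (H0&H1&H2&H3&H4); repeat split; apply SF_px; auto. Qed.
Lemma SFV_vpy F : SFV F -> SFV (vpy F).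
Proof. intros (H0&H1&H2&H3&H4); repeat split; apply SF_py; auto. Qed.
Lemma smoothV_SFV F : smoothV_on U F -> SFV F.
Proof. intros (H0&H1&H2&H3&H4); repeat split; apply SFsm; auto. Qed.

Lemma SF_lor A B : SFV A -> SFV B -> SF U (fun a b => lor (A a b) (B a b)).
Proof.
  intros (A0&A1&A2&A3&A4) (B0&B1&B2&B3&B4). unfold lor.
  apply SFsub; repeat apply SFadd; apply SFmul; auto.
Qed.


Lemma px_lor A B x y : SFV A -> SFV B -> U x y ->
  px (fun a b => lor (A a b) (B a b)) x y = lor (vpx A x y) (B x y) + lor (A x y) (vpx B x y).
Proof.
  intros (A0&A1&A2&A3&A4) (B0&B1&B2&B3&B4) Hu. unfold lor.
  rewrite (px_ext U HU) with (k := fun a b => (c0 (A a b) * c0 (B a b) + c1 (A a b) * c1 (B a b) + c2 (A a b) * c2 (B a b) + c3 (A a b) * c3 (B a b)) + (-1) * (c4 (A a b) * c4 (B a b))) by (auto; intros; ring).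
  rewrite !px_add; try okall.
  rewrite !px_mul; try okall.
  rewrite px_const. simpl. ring.
  all: repeat first [apply SFadd | apply SFmul | apply SFc | assumption].
Qed.

Lemma py_lor A B x y : SFV A -> SFV B -> U x y ->
  py (fun a b => lor (A a b) (B a b)) x y = lor (vpy A x y) (B x y) + lor (A x y) (vpy B x y).
Proof.
  intros (A0&A1&A2&A3&A4) (B0&B1&B2&B3&B4) Hu. unfold lor.
  rewrite (py_ext U HU) with (k := fun a b => (c0 (A a b) * c0 (B a b) + c1 (A a b) * c1 (B a b) + c2 (A a b) * c2 (B a b) + c3 (A a b) * c3 (B a b)) + (-1) * (c4 (A a b) * c4 (B a b))) by (auto; intros; ring).
  rewrite !py_add; try okall.
  rewrite !py_mul; try okall.
  rewrite py_const. simpl. ring.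
  all: sfc.
Qed.

Lemma SFV_vadd F G : SFV F -> SFV G -> SFV (fun a b => vadd (F a b) (G a b)).
Proof. intros (?&?&?&?&?) (?&?&?&?&?); repeat split; simpl; apply SFadd; auto. Qed.
Lemma SFV_vsub F G : SFV F -> SFV G -> SFV (fun a b => vsub (F a b) (G a b)).
Proof. intros (?&?&?&?&?) (?&?&?&?&?); repeat split; simpl; sfc. Qed.
Lemma SFV_vscal c F : SF U c -> SFV F -> SFV (fun a b => vscal (c a b) (F a b)).
Proof. intros ? (?&?&?&?&?); repeat split; simpl; apply SFmul; auto. Qed.
Lemma SFV_ext F G : SFV F -> (forall a b, U a b -> F a b = G a b) -> SFV G.
Proof.
  intros (?&?&?&?&?) E; repeat split;
  [apply SFext with (fun a b => c0 (F a b))|apply SFext with (fun a b => c1 (F a b))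
  |apply SFext with (fun a b => c2 (F a b))|apply SFext with (fun a b => c3 (F a b))
  |apply SFext with (fun a b => c4 (F a b))]; auto; intros a b Hab; rewrite (E a b Hab); auto.
Qed.

Lemma vpx_ext F G x y : (forall a b, U a b -> F a b = G a b) -> U x y -> vpx F x y = vpx G x y.
Proof. intros E Hu. apply V5eq; simpl; apply (px_ext U HU); auto; intros a b Hab; rewrite (E a b Hab); auto. Qed.
Lemma vpy_ext F G x y : (forall a b, U a b -> F a b = G a b) -> U x y -> vpy F x y = vpy G x y.
Proof. intros E Hu. apply V5eq; simpl; apply (py_ext U HU); auto; intros a b Hab; rewrite (E a b Hab); auto. Qed.

Lemma vpx_add F G x y : SFV F -> SFV G -> U x y ->
  vpx (fun a b => vadd (F a b) (G a b)) x y = vadd (vpx F x y) (vpx G x y).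
Proof. intros (?&?&?&?&?) (?&?&?&?&?) Hu. apply V5eq; simpl; rewrite px_add; auto; okall. Qed.
Lemma vpy_add F G x y : SFV F -> SFV G -> U x y ->
  vpy (fun a b => vadd (F a b) (G a b)) x y = vadd (vpy F x y) (vpy G x y).
Proof. intros (?&?&?&?&?) (?&?&?&?&?) Hu. apply V5eq; simpl; rewrite py_add; auto; okall. Qed.

Lemma vpx_scalf c F x y : SF U c -> SFV F -> U x y ->
  vpx (fun a b => vscal (c a b) (F a b)) x y = vadd (vscal (px c x y) (F x y)) (vscal (c x y) (vpx F x y)).
Proof. intros ? (?&?&?&?&?) Hu. apply V5eq; simpl; rewrite px_mul; auto; okall. Qed.
Lemma vpy_scalf c F x y : SF U c -> SFV F -> U x y ->
  vpy (fun a b => vscal (c a b) (F a b)) x y = vadd (vscal (py c x y) (F x y)) (vscal (c x y) (vpy F x y)).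
Proof. intros ? (?&?&?&?&?) Hu. apply V5eq; simpl; rewrite py_mul; auto; okall. Qed.

Lemma vpx_scal (c : R) F x y : SFV F -> U x y ->
  vpx (fun a b => vscal c (F a b)) x y = vscal c (vpx F x y).
Proof.
  intros HF Hu. rewrite (vpx_scalf (fun _ _ => c)); auto; [|apply SFc].
  rewrite px_const. apply V5eq; simpl; ring.
Qed.
Lemma vpy_scal (c : R) F x y : SFV F -> U x y ->
  vpy (fun a b => vscal c (F a b)) x y = vscal c (vpy F x y).
Proof.
  intros HF Hu. rewrite (vpy_scalf (fun _ _ => c)); auto; [|apply SFc].
  rewrite py_const. apply V5eq; simpl; ring.
Qed.

Lemma vpx_sub F G x y : SFV F -> SFV G -> U x y ->
  vpx (fun a b => vsub (F a b) (G a b)) x y = vsub (vpx F x y) (vpx G x y).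
Proof.
  intros HF HG Hu. unfold vsub at 1. rewrite vpx_add; auto.
  - rewrite vpx_scal; auto.
  - apply SFV_vscal; auto; apply SFc.
Qed.
Lemma vpy_sub F G x y : SFV F -> SFV G -> U x y ->
  vpy (fun a b => vsub (F a b) (G a b)) x y = vsub (vpy F x y) (vpy G x y).
Proof.
  intros HF HG Hu. unfold vsub at 1. rewrite vpy_add; auto.
  - rewrite vpy_scal; auto.
  - apply SFV_vscal; auto; apply SFc.
Qed.

Lemma vschwarz F x y : SFV F -> U x y -> vpx (vpy F) x y = vpy (vpx F) x y.
Proof. intros (?&?&?&?&?) Hu. apply V5eq; simpl; apply (SF_schwarz U HU); auto. Qed.

End Vec.

Lemma lor_sym u v : lor u v = lor v u. Proof. unfold lor; ring. Qed.
Lemma lor_addl u v w : lor (vadd u v) w = lor u w + lor v w. Proof. unfold lor, vadd; simpl; ring. Qed.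
Lemma lor_addr u v w : lor w (vadd u v) = lor w u + lor w v. Proof. unfold lor, vadd; simpl; ring. Qed.
Lemma lor_subl u v w : lor (vsub u v) w = lor u w - lor v w. Proof. unfold lor, vsub, vadd, vscal; simpl; ring. Qed.
Lemma lor_subr u v w : lor w (vsub u v) = lor w u - lor w v. Proof. unfold lor, vsub, vadd, vscal; simpl; ring. Qed.
Lemma lor_scall c u w : lor (vscal c u) w = c * lor u w. Proof. unfold lor, vscal; simpl; ring. Qed.
Lemma lor_scalr c u w : lor w (vscal c u) = c * lor w u. Proof. unfold lor, vscal; simpl; ring. Qed.
Lemma lor_zerol w : lor vzero w = 0. Proof. unfold lor, vzero; simpl; ring. Qed.
Lemma lor_zeror w : lor w vzero = 0. Proof. unfold lor, vzero; simpl; ring. Qed.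
Ltac lorsimp := repeat rewrite ?lor_addl, ?lor_addr, ?lor_subl, ?lor_subr, ?lor_scall, ?lor_scalr, ?lor_zerol, ?lor_zeror.
Ltac lorsimp_in H := repeat rewrite ?lor_addl, ?lor_addr, ?lor_subl, ?lor_subr, ?lor_scall, ?lor_scalr, ?lor_zerol, ?lor_zeror in H.

Lemma basis5S (e0 e1 e2 e3 e4 w : V5) (d0 d1 d2 d3 d4 : R) :
  d0 <> 0 -> d1 <> 0 -> d2 <> 0 -> d3 <> 0 -> d4 <> 0 ->
  lor e0 e0 = d0 -> lor e1 e1 = d1 -> lor e2 e2 = d2 -> lor e3 e3 = d3 -> lor e4 e4 = d4 ->
  lor e0 e1 = 0 -> lor e0 e2 = 0 -> lor e0 e3 = 0 -> lor e0 e4 = 0 ->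
  lor e1 e2 = 0 -> lor e1 e3 = 0 -> lor e1 e4 = 0 ->
  lor e2 e3 = 0 -> lor e2 e4 = 0 -> lor e3 e4 = 0 ->
  lor w e0 = 0 -> lor w e1 = 0 -> lor w e2 = 0 -> lor w e3 = 0 -> lor w e4 = 0 ->
  w = vzero.
Proof. exact (Basis.basis5 e0 e1 e2 e3 e4 w d0 d1 d2 d3 d4). Qed.

Lemma complete (F X Y N1 N2 u v : V5) (lam : R) :
  lam <> 0 ->
  lor F F = 1 -> lor X X = lam -> lor Y Y = lam -> lor N1 N1 = 1 -> lor N2 N2 = -1 ->
  lor F X = 0 -> lor F Y = 0 -> lor F N1 = 0 -> lor F N2 = 0 ->
  lor X Y = 0 -> lor X N1 = 0 -> lor X N2 = 0 -> lor Y N1 = 0 -> lor Y N2 = 0 -> lor N1 N2 = 0 ->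
  lor u v = lor u F * lor v F + (lor u X * lor v X + lor u Y * lor v Y) / lam
            + lor u N1 * lor v N1 - lor u N2 * lor v N2.
Proof.
  intros Hl gF gX gY g1 g2 gFX gFY gF1 gF2 gXY gX1 gX2 gY1 gY2 g12.
  set (w := vsub u (vadd (vscal (lor u F) F) (vadd (vscal (lor u X / lam) X)
              (vadd (vscal (lor u Y / lam) Y) (vsub (vscal (lor u N1) N1) (vscal (lor u N2) N2)))))).
  assert (Hw : w = vzero).
  { apply (basis5S F X Y N1 N2 w 1 lam lam 1 (-1)); auto; try lra;
    unfold w; lorsimp; rewrite ?(lor_sym X F), ?(lor_sym Y F), ?(lor_sym N1 F), ?(lor_sym N2 F),
      ?(lor_sym Y X), ?(lor_sym N1 X), ?(lor_sym N2 X), ?(lor_sym N1 Y), ?(lor_sym N2 Y), ?(lor_sym N2 N1);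
    rewrite ?gF, ?gX, ?gY, ?g1, ?g2, ?gFX, ?gFY, ?gF1, ?gF2, ?gXY, ?gX1, ?gX2, ?gY1, ?gY2, ?g12; field; auto. }
  assert (E : lor w v = 0) by (rewrite Hw; apply lor_zerol).
  unfold w in E; lorsimp_in E.
  rewrite ?(lor_sym F v), ?(lor_sym X v), ?(lor_sym Y v), ?(lor_sym N1 v), ?(lor_sym N2 v) in E.
  unfold Rdiv in *. lra.
Qed.

Lemma vpy_zero a b : vpy (fun _ _ => vzero) a b = vzero.
Proof. apply V5eq; simpl; apply py_const. Qed.
Lemma vpx_zero a b : vpx (fun _ _ => vzero) a b = vzero.
Proof. apply V5eq; simpl; apply px_const. Qed.

Lemma fz_eq f a b : f_z f a b = (vscal (1/2) (vpx f a b), vscal (-1/2) (vpy f a b)).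
Proof.
  unfold f_z, cvdz. cbn [fst snd cv_of].
  change (fun a0 b0 : R => vzero) with (fun _ _ : R => vzero).
  rewrite vpy_zero, vpx_zero. f_equal; apply V5eq; simpl; lra.
Qed.

Lemma fzb_eq f a b : f_zbar f a b = (vscal (1/2) (vpx f a b), vscal (1/2) (vpy f a b)).
Proof.
  unfold f_zbar, cvdzbar. cbn [fst snd cv_of].
  rewrite vpy_zero, vpx_zero. f_equal; apply V5eq; simpl; lra.
Qed.

Lemma e2u_eq f a b : e2u f a b = (lor (vpx f a b) (vpx f a b) + lor (vpy f a b) (vpy f a b)) / 4.
Proof. unfold e2u. rewrite fz_eq, fzb_eq. unfold clor; cbn [fst snd]. lorsimp. field. Qed.


Section Main.
Variables (U : R -> R -> Prop) (f N1 N2 H : R -> R -> V5) (h : R -> R -> R).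
Hypothesis HU : open2 U.
Hypotheses (Hf : smoothV_on U f) (HN1 : smoothV_on U N1) (HN2 : smoothV_on U N2).
Hypothesis HS : forall x y, U x y -> lor (f x y) (f x y) = 1.
Hypothesis Hconf : forall x y, U x y -> clor (f_z f x y) (f_z f x y) = czero.
Hypothesis Hspace : forall x y, U x y -> 0 < e2u f x y.
Hypothesis HN : forall x y, U x y ->
     lor (N1 x y) (f x y) = 0 /\ lor (N1 x y) (vpx f x y) = 0 /\
     lor (N1 x y) (vpy f x y) = 0 /\
     lor (N2 x y) (f x y) = 0 /\ lor (N2 x y) (vpx f x y) = 0 /\
     lor (N2 x y) (vpy f x y) = 0 /\
     lor (N1 x y) (N1 x y) = 1 /\ lor (N2 x y) (N2 x y) = -1 /\
     lor (N1 x y) (N2 x y) = 0 /\ lor (N2 x y) e4 < 0.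
Hypothesis HH : forall x y, U x y ->
     f_zzbar f x y = cv_of (vadd (vscal (- e2u f x y) (f x y)) (vscal (e2u f x y) (H x y))).
Hypothesis Hmt : forall x y, U x y -> lor (H x y) (H x y) = 0.
Hypothesis Hh : forall x y, U x y -> H x y = vscal (h x y) (vadd (N1 x y) (N2 x y)).
Hypothesis HH0 : forall x y, U x y -> H x y <> vzero.
Hypothesis HQ : forall x y, U x y -> Qcoef f x y <> czero.

Local Notation fX := (vpx f).
Local Notation fY := (vpy f).
Local Notation fXX := (vpx (vpx f)).
Local Notation fXY := (vpy (vpx f)).
Local Notation fYX := (vpx (vpy f)).
Local Notation fYY := (vpy (vpy f)).

Lemma sf_f : SFV U f. Proof. apply smoothV_SFV; auto. Qed.
Lemma sf_N1 : SFV U N1. Proof. apply smoothV_SFV; auto. Qed.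
Lemma sf_N2 : SFV U N2. Proof. apply smoothV_SFV; auto. Qed.
Lemma sf_X : SFV U fX. Proof. apply (SFV_vpx U HU), sf_f. Qed.
Lemma sf_Y : SFV U fY. Proof. apply (SFV_vpy U HU), sf_f. Qed.
Lemma sf_XX : SFV U fXX. Proof. apply (SFV_vpx U HU), sf_X. Qed.
Lemma sf_XY : SFV U fXY. Proof. apply (SFV_vpy U HU), sf_X. Qed.
Lemma sf_YX : SFV U fYX. Proof. apply (SFV_vpx U HU), sf_Y. Qed.
Lemma sf_YY : SFV U fYY. Proof. apply (SFV_vpy U HU), sf_Y. Qed.
Hint Resolve sf_f sf_N1 sf_N2 sf_X sf_Y sf_XX sf_XY sf_YX sf_YY : sfv.

Lemma schw_f x y : U x y -> fYX x y = fXY x y.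
Proof. intros Hu. apply (vschwarz U HU); auto. apply sf_f. Qed.

Lemma conf_eq x y : U x y -> lor (fX x y) (fX x y) = lor (fY x y) (fY x y) /\ lor (fX x y) (fY x y) = 0.
Proof.
  intros Hu. pose proof (Hconf x y Hu) as E. rewrite fz_eq in E. unfold clor, czero in E; cbn [fst snd] in E.
  injection E as E1 E2. lorsimp_in E1. lorsimp_in E2. rewrite (lor_sym (fY x y) (fX x y)) in E2.
  split; lra.
Qed.

Lemma e2u_U x y : U x y -> e2u f x y = lor (fX x y) (fX x y) / 2.
Proof. intros Hu. rewrite e2u_eq. destruct (conf_eq x y Hu) as [E1 _]. rewrite E1. field. Qed.

Lemma sf_e : SF U (e2u f).
Proof.
  apply SFext with (fun a b => (lor (fX a b) (fX a b) + lor (fY a b) (fY a b)) * / 4).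
  - apply SFmul; [apply SFadd; apply SF_lor; auto with sfv|apply SFc].
  - intros; rewrite e2u_eq; unfold Rdiv; ring.
Qed.

Lemma fz_fun : f_z f = fun a b => (vscal (1/2) (fX a b), vscal (-1/2) (fY a b)).
Proof. apply functional_extensionality; intro a; apply functional_extensionality; intro b; apply fz_eq. Qed.

Lemma fzz_eq x y : U x y ->
  f_zz f x y = (vscal (1/4) (vsub (fXX x y) (fYY x y)), vscal (-1/2) (fXY x y)).
Proof.
  intros Hu. unfold f_zz. rewrite fz_fun. unfold cvdz; cbn [fst snd].
  rewrite !(vpx_scal U HU), !(vpy_scal U HU); auto with sfv. rewrite (schw_f x y Hu).
  f_equal; apply V5eq; simpl; lra.
Qed.

Lemma fzzb_eq x y : U x y ->
  fst (f_zzbar f x y) = vscal (1/4) (vadd (fXX x y) (fYY x y)).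
Proof.
  intros Hu. unfold f_zzbar. rewrite fz_fun. unfold cvdzbar; cbn [fst snd].
  rewrite !(vpx_scal U HU), !(vpy_scal U HU); auto with sfv.
  apply V5eq; simpl; lra.
Qed.

Lemma Delta_eq x y : U x y ->
  vadd (fXX x y) (fYY x y) = vscal (4 * e2u f x y) (vsub (H x y) (f x y)).
Proof.
  intros Hu. pose proof (fzzb_eq x y Hu) as E. rewrite (HH x y Hu) in E. cbn [fst cv_of] in E.
  pose proof (f_equal c0 E) as E0; pose proof (f_equal c1 E) as E1; pose proof (f_equal c2 E) as E2;
  pose proof (f_equal c3 E) as E3; pose proof (f_equal c4 E) as E4. simpl in E0, E1, E2, E3, E4.
  apply V5eq; simpl; lra.
Qed.

Lemma epos x y : U x y -> e2u f x y <> 0.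
Proof. intros Hu; pose proof (Hspace x y Hu); lra. Qed.

Lemma H_eq x y : U x y ->
  H x y = vadd (f x y) (vscal (/ (4 * e2u f x y)) (vadd (fXX x y) (fYY x y))).
Proof.
  intros Hu. rewrite (Delta_eq x y Hu). pose proof (epos x y Hu).
  apply V5eq; simpl; field; auto.
Qed.

Lemma sf_H : SFV U H.
Proof.
  apply SFV_ext with (fun a b => vadd (f a b) (vscal (/ (4 * e2u f a b)) (vadd (fXX a b) (fYY a b)))).
  - apply SFV_vadd; auto with sfv. apply SFV_vscal; [|apply SFV_vadd; auto with sfv].
    apply SFinv; [apply SFmul; [apply SFc|apply sf_e]|]. intros a b Hab; pose proof (epos a b Hab); lra.
  - intros a b Hab; symmetry; apply H_eq; auto.
Qed.
Hint Resolve sf_H : sfv.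

Lemma h_eq x y : U x y -> h x y = lor (H x y) (N1 x y).
Proof.
  intros Hu. rewrite (Hh x y Hu). lorsimp. destruct (HN x y Hu) as (_&_&_&_&_&_&E1&_&E3&_).
  rewrite (lor_sym (N2 x y)), E1, E3. ring.
Qed.

Lemma sf_h : SF U h.
Proof. apply SFext with (fun a b => lor (H a b) (N1 a b)); [apply SF_lor; auto with sfv|]. intros; symmetry; apply h_eq; auto. Qed.

Lemma dlor_x A B x y k : SFV U A -> SFV U B -> SF U k -> U x y ->
  (forall a b, U a b -> lor (A a b) (B a b) = k a b) ->
  lor (vpx A x y) (B x y) + lor (A x y) (vpx B x y) = px k x y.
Proof.
  intros HA HB Hk Hu E. rewrite <- (px_lor U HU); auto. apply (px_ext U HU); auto.
Qed.
Lemma dlor_y A B x y k : SFV U A -> SFV U B -> SF U k -> U x y ->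
  (forall a b, U a b -> lor (A a b) (B a b) = k a b) ->
  lor (vpy A x y) (B x y) + lor (A x y) (vpy B x y) = py k x y.
Proof.
  intros HA HB Hk Hu E. rewrite <- (py_lor U HU); auto. apply (py_ext U HU); auto.
Qed.
Lemma dlor0_x A B x y c : SFV U A -> SFV U B -> U x y ->
  (forall a b, U a b -> lor (A a b) (B a b) = c) ->
  lor (vpx A x y) (B x y) + lor (A x y) (vpx B x y) = 0.
Proof. intros. rewrite (dlor_x A B x y (fun _ _ => c)); auto; [apply px_const|apply SFc]. Qed.
Lemma dlor0_y A B x y c : SFV U A -> SFV U B -> U x y ->
  (forall a b, U a b -> lor (A a b) (B a b) = c) ->
  lor (vpy A x y) (B x y) + lor (A x y) (vpy B x y) = 0.
Proof. intros. rewrite (dlor_y A B x y (fun _ _ => c)); auto; [apply py_const|apply SFc]. Qed.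

Lemma fXf x y : U x y -> lor (fX x y) (f x y) = 0.
Proof. intros Hu. pose proof (dlor0_x f f x y 1 sf_f sf_f Hu HS). rewrite (lor_sym (f x y)) in H0. lra. Qed.
Lemma fYf x y : U x y -> lor (fY x y) (f x y) = 0.
Proof. intros Hu. pose proof (dlor0_y f f x y 1 sf_f sf_f Hu HS). rewrite (lor_sym (f x y)) in H0. lra. Qed.
Lemma Hf0 x y : U x y -> lor (H x y) (f x y) = 0.
Proof. intros Hu. rewrite (Hh x y Hu). lorsimp. destruct (HN x y Hu) as (E1&_&_&E2&_). rewrite E1, E2. ring. Qed.
Lemma HX0 x y : U x y -> lor (H x y) (fX x y) = 0.
Proof. intros Hu. rewrite (Hh x y Hu). lorsimp. destruct (HN x y Hu) as (_&E1&_&_&E2&_). rewrite E1, E2. ring. Qed.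
Lemma HY0 x y : U x y -> lor (H x y) (fY x y) = 0.
Proof. intros Hu. rewrite (Hh x y Hu). lorsimp. destruct (HN x y Hu) as (_&_&E1&_&_&E2&_). rewrite E1, E2. ring. Qed.

Lemma Q_re x y : U x y -> fst (Qcoef f x y) =
  (1/16) * lor (vsub (fXX x y) (fYY x y)) (vsub (fXX x y) (fYY x y)) + (-1/4) * lor (fXY x y) (fXY x y).
Proof. intros Hu. unfold Qcoef. rewrite (fzz_eq x y Hu). unfold clor; cbn [fst snd]. lorsimp. field. Qed.
Lemma Q_im x y : U x y -> snd (Qcoef f x y) = (-1/4) * lor (vsub (fXX x y) (fYY x y)) (fXY x y).
Proof. intros Hu. unfold Qcoef. rewrite (fzz_eq x y Hu). unfold clor; cbn [fst snd]. lorsimp.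
  rewrite (lor_sym (fXY x y) (fXX x y)), (lor_sym (fXY x y) (fYY x y)). field. Qed.
Lemma D_re x y : U x y -> fst (delta_coef f N1 N2 h x y) = (1/4) * lor (vsub (fXX x y) (fYY x y)) (H x y).
Proof.
  intros Hu. unfold delta_coef, crscal, csub, xi1, xi2, copp. rewrite (fzz_eq x y Hu), (Hh x y Hu).
  unfold clor, cv_of; cbn [fst snd]. lorsimp. field.
Qed.
Lemma D_im x y : U x y -> snd (delta_coef f N1 N2 h x y) = (-1/2) * lor (fXY x y) (H x y).
Proof.
  intros Hu. unfold delta_coef, crscal, csub, xi1, xi2, copp. rewrite (fzz_eq x y Hu), (Hh x y Hu).
  unfold clor, cv_of; cbn [fst snd]. lorsimp. field.
Qed.

Lemma sf_P : SFV U (fun a b => vsub (fXX a b) (fYY a b)).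
Proof. apply SFV_vsub; auto with sfv. Qed.
Hint Resolve sf_P : sfv.

Lemma sf_Qre : SF U (fun a b => fst (Qcoef f a b)).
Proof.
  eapply SFext; [|intros a b Hab; symmetry; apply Q_re; auto].
  apply SFadd; apply SFmul; try apply SFc; apply SF_lor; auto with sfv.
Qed.
Lemma sf_Qim : SF U (fun a b => snd (Qcoef f a b)).
Proof.
  eapply SFext; [|intros a b Hab; symmetry; apply Q_im; auto].
  apply SFmul; try apply SFc; apply SF_lor; auto with sfv.
Qed.
Lemma sf_Dre : SF U (fun a b => fst (delta_coef f N1 N2 h a b)).
Proof.
  eapply SFext; [|intros a b Hab; symmetry; apply D_re; auto].
  apply SFmul; try apply SFc; apply SF_lor; auto with sfv.
Qed.
Lemma sf_Dim : SF U (fun a b => snd (delta_coef f N1 N2 h a b)).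
Proof.
  eapply SFext; [|intros a b Hab; symmetry; apply D_im; auto].
  apply SFmul; try apply SFc; apply SF_lor; auto with sfv.
Qed.


Lemma px_cl (c : R) A B x y : SFV U A -> SFV U B -> U x y ->
  px (fun a b => c * lor (A a b) (B a b)) x y = c * (lor (vpx A x y) (B x y) + lor (A x y) (vpx B x y)).
Proof.
  intros HA HB Hu. rewrite px_mul; [|apply (SF_ok U HU); auto; apply SFc|apply (SF_ok U HU); auto; apply SF_lor; auto].
  rewrite px_const, (px_lor U HU); auto. ring.
Qed.
Lemma py_cl (c : R) A B x y : SFV U A -> SFV U B -> U x y ->
  py (fun a b => c * lor (A a b) (B a b)) x y = c * (lor (vpy A x y) (B x y) + lor (A x y) (vpy B x y)).
Proof.
  intros HA HB Hu. rewrite py_mul; [|apply (SF_ok U HU); auto; apply SFc|apply (SF_ok U HU); auto; apply SF_lor; auto].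
  rewrite py_const, (py_lor U HU); auto. ring.
Qed.
Lemma px_cl2 (c d : R) A B C D x y : SFV U A -> SFV U B -> SFV U C -> SFV U D -> U x y ->
  px (fun a b => c * lor (A a b) (B a b) + d * lor (C a b) (D a b)) x y =
  c * (lor (vpx A x y) (B x y) + lor (A x y) (vpx B x y)) + d * (lor (vpx C x y) (D x y) + lor (C x y) (vpx D x y)).
Proof.
  intros HA HB HC HD Hu. rewrite px_add; [|apply (SF_ok U HU); auto; apply SFmul; try apply SFc; apply SF_lor; auto..].
  rewrite !px_cl; auto.
Qed.
Lemma py_cl2 (c d : R) A B C D x y : SFV U A -> SFV U B -> SFV U C -> SFV U D -> U x y ->
  py (fun a b => c * lor (A a b) (B a b) + d * lor (C a b) (D a b)) x y =
  c * (lor (vpy A x y) (B x y) + lor (A x y) (vpy B x y)) + d * (lor (vpy C x y) (D x y) + lor (C x y) (vpy D x y)).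
Proof.
  intros HA HB HC HD Hu. rewrite py_add; [|apply (SF_ok U HU); auto; apply SFmul; try apply SFc; apply SF_lor; auto..].
  rewrite !py_cl; auto.
Qed.

Lemma DXv_eq x y : U x y ->
  vadd (vpx fXX x y) (vpx fYY x y) =
  vadd (vscal (4 * lor (fXX x y) (fX x y)) (vsub (H x y) (f x y))) (vscal (4 * e2u f x y) (vsub (vpx H x y) (fX x y))).
Proof.
  intros Hu. rewrite <- (vpx_add U HU); auto with sfv.
  rewrite (vpx_ext U HU _ (fun a b => vscal (4 * e2u f a b) (vsub (H a b) (f a b)))); auto; [|intros; apply Delta_eq; auto].
  rewrite (vpx_scalf U HU); auto; [|apply SFmul; [apply SFc|apply sf_e]|apply SFV_vsub; auto with sfv].
  rewrite (vpx_sub U HU); auto with sfv.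
  rewrite px_mul; [|apply (SF_ok U HU); auto; apply SFc|apply (SF_ok U HU); auto; apply sf_e].
  rewrite px_const.
  rewrite (px_ext U HU (e2u f) (fun a b => (1/2) * lor (fX a b) (fX a b))); auto; [|intros; rewrite e2u_U; auto; field].
  rewrite px_cl; auto with sfv. rewrite (lor_sym (fX x y) (fXX x y)).
  apply V5eq; simpl; field.
Qed.

Lemma DYv_eq x y : U x y ->
  vadd (vpy fXX x y) (vpy fYY x y) =
  vadd (vscal (4 * lor (fXY x y) (fX x y)) (vsub (H x y) (f x y))) (vscal (4 * e2u f x y) (vsub (vpy H x y) (fY x y))).
Proof.
  intros Hu. rewrite <- (vpy_add U HU); auto with sfv.
  rewrite (vpy_ext U HU _ (fun a b => vscal (4 * e2u f a b) (vsub (H a b) (f a b)))); auto; [|intros; apply Delta_eq; auto].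
  rewrite (vpy_scalf U HU); auto; [|apply SFmul; [apply SFc|apply sf_e]|apply SFV_vsub; auto with sfv].
  rewrite (vpy_sub U HU); auto with sfv.
  rewrite py_mul; [|apply (SF_ok U HU); auto; apply SFc|apply (SF_ok U HU); auto; apply sf_e].
  rewrite py_const.
  rewrite (py_ext U HU (e2u f) (fun a b => (1/2) * lor (fX a b) (fX a b))); auto; [|intros; rewrite e2u_U; auto; field].
  rewrite py_cl; auto with sfv. rewrite (lor_sym (fX x y) (fXY x y)).
  apply V5eq; simpl; field.
Qed.

Lemma schw3a x y : U x y -> vpx fYY x y = vpy fXY x y.
Proof.
  intros Hu. rewrite (vschwarz U HU); auto with sfv.
  apply (vpy_ext U HU); auto. intros; apply schw_f; auto.
Qed.
Lemma schw3b x y : U x y -> vpx fXY x y = vpy fXX x y.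
Proof. intros Hu. rewrite (vschwarz U HU); auto with sfv. Qed.

Lemma hne x y : U x y -> h x y <> 0.
Proof.
  intros Hu E. apply (HH0 x y Hu). rewrite (Hh x y Hu), E. apply V5eq; simpl; ring.
Qed.

Lemma point x y : U x y ->
  let p1 := lor (vpx H x y) (N1 x y) in let p2 := lor (vpy H x y) (N1 x y) in
  let al := lor (vsub (fXX x y) (fYY x y)) (vadd (N1 x y) (N2 x y)) in
  let be := lor (fXY x y) (vadd (N1 x y) (N2 x y)) in
  cdzbar (delta_coef f N1 N2 h) x y = ((p1 * al + 2 * p2 * be) / 8, (p2 * al - 2 * p1 * be) / 8) /\
  cdzbar (Qcoef f) x y = (e2u f x y * (p1 * al - 2 * p2 * be) / 4, - e2u f x y * (p2 * al + 2 * p1 * be) / 4) /\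
  (al = 0 -> be = 0 -> Qcoef f x y = czero) /\
  (lor (vpx H x y) (N2 x y) = - p1 /\ lor (vpy H x y) (N2 x y) = - p2).
Proof.
  intros Hu p1 p2 al be.
  assert (Dre_x : px (fun a b => fst (delta_coef f N1 N2 h a b)) x y =
     (1/4) * (lor (vpx (fun a b => vsub (fXX a b) (fYY a b)) x y) (H x y) + lor (vsub (fXX x y) (fYY x y)) (vpx H x y))).
  { rewrite (px_ext U HU _ (fun a b => (1/4) * lor (vsub (fXX a b) (fYY a b)) (H a b))); auto; [|intros; apply D_re; auto].
    apply px_cl; auto with sfv. }
  assert (Dre_y : py (fun a b => fst (delta_coef f N1 N2 h a b)) x y =
     (1/4) * (lor (vpy (fun a b => vsub (fXX a b) (fYY a b)) x y) (H x y) + lor (vsub (fXX x y) (fYY x y)) (vpy H x y))).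
  { rewrite (py_ext U HU _ (fun a b => (1/4) * lor (vsub (fXX a b) (fYY a b)) (H a b))); auto; [|intros; apply D_re; auto].
    apply py_cl; auto with sfv. }
  assert (Dim_x : px (fun a b => snd (delta_coef f N1 N2 h a b)) x y =
     (-1/2) * (lor (vpx fXY x y) (H x y) + lor (fXY x y) (vpx H x y))).
  { rewrite (px_ext U HU _ (fun a b => (-1/2) * lor (fXY a b) (H a b))); auto; [|intros; apply D_im; auto].
    apply px_cl; auto with sfv. }
  assert (Dim_y : py (fun a b => snd (delta_coef f N1 N2 h a b)) x y =
     (-1/2) * (lor (vpy fXY x y) (H x y) + lor (fXY x y) (vpy H x y))).
  { rewrite (py_ext U HU _ (fun a b => (-1/2) * lor (fXY a b) (H a b))); auto; [|intros; apply D_im; auto].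
    apply py_cl; auto with sfv. }
  assert (Qre_x : px (fun a b => fst (Qcoef f a b)) x y =
     (1/16) * (lor (vpx (fun a b => vsub (fXX a b) (fYY a b)) x y) (vsub (fXX x y) (fYY x y)) +
               lor (vsub (fXX x y) (fYY x y)) (vpx (fun a b => vsub (fXX a b) (fYY a b)) x y)) +
     (-1/4) * (lor (vpx fXY x y) (fXY x y) + lor (fXY x y) (vpx fXY x y))).
  { rewrite (px_ext U HU _ (fun a b => (1/16) * lor (vsub (fXX a b) (fYY a b)) (vsub (fXX a b) (fYY a b)) + (-1/4) * lor (fXY a b) (fXY a b))); auto; [|intros; apply Q_re; auto].
    apply px_cl2; auto with sfv. }
  assert (Qre_y : py (fun a b => fst (Qcoef f a b)) x y =
     (1/16) * (lor (vpy (fun a b => vsub (fXX a b) (fYY a b)) x y) (vsub (fXX x y) (fYY x y)) +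
               lor (vsub (fXX x y) (fYY x y)) (vpy (fun a b => vsub (fXX a b) (fYY a b)) x y)) +
     (-1/4) * (lor (vpy fXY x y) (fXY x y) + lor (fXY x y) (vpy fXY x y))).
  { rewrite (py_ext U HU _ (fun a b => (1/16) * lor (vsub (fXX a b) (fYY a b)) (vsub (fXX a b) (fYY a b)) + (-1/4) * lor (fXY a b) (fXY a b))); auto; [|intros; apply Q_re; auto].
    apply py_cl2; auto with sfv. }
  assert (Qim_x : px (fun a b => snd (Qcoef f a b)) x y =
     (-1/4) * (lor (vpx (fun a b => vsub (fXX a b) (fYY a b)) x y) (fXY x y) + lor (vsub (fXX x y) (fYY x y)) (vpx fXY x y))).
  { rewrite (px_ext U HU _ (fun a b => (-1/4) * lor (vsub (fXX a b) (fYY a b)) (fXY a b))); auto; [|intros; apply Q_im; auto].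
    apply px_cl; auto with sfv. }
  assert (Qim_y : py (fun a b => snd (Qcoef f a b)) x y =
     (-1/4) * (lor (vpy (fun a b => vsub (fXX a b) (fYY a b)) x y) (fXY x y) + lor (vsub (fXX x y) (fYY x y)) (vpy fXY x y))).
  { rewrite (py_ext U HU _ (fun a b => (-1/4) * lor (vsub (fXX a b) (fYY a b)) (fXY a b))); auto; [|intros; apply Q_im; auto].
    apply py_cl; auto with sfv. }
  rewrite (vpx_sub U HU) in Dre_x, Qre_x, Qim_x; auto with sfv.
  rewrite (vpy_sub U HU) in Dre_y, Qre_y, Qim_y; auto with sfv.
  destruct (HN x y Hu) as (n1F&n1X&n1Y&n2F&n2X&n2Y&g11&g22&g12&_).
  destruct (conf_eq x y Hu) as [cXX cXY].
  assert (gFF := HS x y Hu). assert (gXF := fXf x y Hu). assert (gYF := fYf x y Hu).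
  assert (eU := e2u_U x y Hu). assert (lampos : 0 < lor (fX x y) (fX x y)) by (pose proof (Hspace x y Hu); lra).
  assert (hv0 := hne x y Hu). assert (hveq := Hh x y Hu).
  assert (HvF := Hf0 x y Hu). assert (HvX := HX0 x y Hu). assert (HvY := HY0 x y Hu).
  assert (HvHv := Hmt x y Hu).
  assert (HxHv := dlor0_x H H x y 0 sf_H sf_H Hu Hmt). assert (HyHv := dlor0_y H H x y 0 sf_H sf_H Hu Hmt).
  assert (HxF := dlor0_x H f x y 0 sf_H sf_f Hu Hf0). assert (HyF := dlor0_y H f x y 0 sf_H sf_f Hu Hf0).
  assert (HxX := dlor0_x H fX x y 0 sf_H sf_X Hu HX0). assert (HyX := dlor0_y H fX x y 0 sf_H sf_X Hu HX0).
  assert (HxY := dlor0_x H fY x y 0 sf_H sf_Y Hu HY0). assert (HyY := dlor0_y H fY x y 0 sf_H sf_Y Hu HY0).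
  assert (XFx := dlor0_x fX f x y 0 sf_X sf_f Hu fXf). assert (XFy := dlor0_y fX f x y 0 sf_X sf_f Hu fXf).
  assert (YFy := dlor0_y fY f x y 0 sf_Y sf_f Hu fYf).
  assert (XYx := dlor0_x fX fY x y 0 sf_X sf_Y Hu (fun a b Hab => proj2 (conf_eq a b Hab))).
  assert (XYy := dlor0_y fX fY x y 0 sf_X sf_Y Hu (fun a b Hab => proj2 (conf_eq a b Hab))).
  assert (XXx := dlor_x fX fX x y (fun a b => lor (fY a b) (fY a b)) sf_X sf_X (SF_lor _ _ _ sf_Y sf_Y) Hu (fun a b Hab => proj1 (conf_eq a b Hab))).
  assert (XXy := dlor_y fX fX x y (fun a b => lor (fY a b) (fY a b)) sf_X sf_X (SF_lor _ _ _ sf_Y sf_Y) Hu (fun a b Hab => proj1 (conf_eq a b Hab))).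
  rewrite (px_lor U HU) in XXx; auto with sfv. rewrite (py_lor U HU) in XXy; auto with sfv.
  assert (Del := Delta_eq x y Hu). assert (DX := DXv_eq x y Hu). assert (DY := DYv_eq x y Hu).
  rewrite (schw3a x y Hu) in DX, Dre_x, Qre_x, Qim_x. rewrite (schw3b x y Hu) in Qre_x, Qim_x, Dim_x.
  rewrite (schw_f x y Hu) in HxY, XYx, XXx.
  assert (QR := Q_re x y Hu). assert (QI := Q_im x y Hu).
  unfold cdzbar; cbv zeta.
  rewrite Dre_x, Dre_y, Dim_x, Dim_y, Qre_x, Qre_y, Qim_x, Qim_y.
  clear Dre_x Dre_y Dim_x Dim_y Qre_x Qre_y Qim_x Qim_y.
  subst p1 p2 al be.
  set (F0 := f x y) in *. set (X0 := fX x y) in *. set (Y0 := fY x y) in *.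
  set (XX0 := fXX x y) in *. set (XY0 := fXY x y) in *. set (YY0 := fYY x y) in *.
  set (n1 := N1 x y) in *. set (n2 := N2 x y) in *. set (Hv := H x y) in *.
  set (Hx := vpx H x y) in *. set (Hy := vpy H x y) in *. set (hv := h x y) in *.
  set (XXX := vpx fXX x y) in *. set (XYY := vpy fXY x y) in *. set (XXY := vpy fXX x y) in *.
  set (YYY := vpy fYY x y) in *. set (ev := e2u f x y) in *.
  clearbody F0 X0 Y0 XX0 XY0 YY0 n1 n2 Hv Hx Hy hv XXX XYY XXY YYY ev.
  set (lam := lor X0 X0) in *.
  assert (lam0 : lam <> 0) by lra.
  assert (CP : forall u v, lor u v = lor u F0 * lor v F0 + (lor u X0 * lor v X0 + lor u Y0 * lor v Y0) / lam
            + lor u n1 * lor v n1 - lor u n2 * lor v n2).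
  { intros u v. apply complete; try reflexivity; try lra; try (rewrite lor_sym; lra). }
  assert (TX : forall W, lor XXX W = lor (vadd (vscal (4 * lor XX0 X0) (vsub Hv F0)) (vscal (4 * ev) (vsub Hx X0))) W - lor XYY W)
    by (intro W; rewrite <- DX; lorsimp; ring).
  assert (TY : forall W, lor YYY W = lor (vadd (vscal (4 * lor XY0 X0) (vsub Hv F0)) (vscal (4 * ev) (vsub Hy Y0))) W - lor XXY W)
    by (intro W; rewrite <- DY; lorsimp; ring).
  assert (hvW : forall W, lor Hv W = hv * (lor W n1 + lor W n2))
    by (intro W; rewrite hveq; lorsimp; rewrite (lor_sym n1 W), (lor_sym n2 W); ring).
  assert (rHxHv : lor Hx Hv = 0) by (rewrite (lor_sym Hv Hx) in HxHv; lra).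
  assert (rHyHv : lor Hy Hv = 0) by (rewrite (lor_sym Hv Hy) in HyHv; lra).
  assert (rHxn2 : lor Hx n2 = - lor Hx n1).
  { rewrite (lor_sym Hx Hv), hvW in rHxHv. apply Rmult_integral in rHxHv. destruct rHxHv as [E|E]; [tauto|].
    lra. }
  assert (rHyn2 : lor Hy n2 = - lor Hy n1).
  { rewrite (lor_sym Hy Hv), hvW in rHyHv. apply Rmult_integral in rHyHv. destruct rHyHv as [E|E]; [tauto|].
    lra. }
  assert (rHxF : lor Hx F0 = 0) by lra.
  assert (rHyF : lor Hy F0 = 0) by lra.
  assert (rHxX : lor Hx X0 = - (hv * (lor XX0 n1 + lor XX0 n2))) by (rewrite hvW in HxX; lra).
  assert (rHxY : lor Hx Y0 = - (hv * (lor XY0 n1 + lor XY0 n2))) by (rewrite hvW in HxY; lra).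
  assert (rHyX : lor Hy X0 = - (hv * (lor XY0 n1 + lor XY0 n2))) by (rewrite hvW in HyX; lra).
  assert (rHyY : lor Hy Y0 = - (hv * (lor YY0 n1 + lor YY0 n2))) by (rewrite hvW in HyY; lra).
  assert (rXXF : lor XX0 F0 = - lam) by lra.
  assert (rXYF : lor XY0 F0 = 0) by lra.
  assert (rYYF : lor YY0 F0 = - lam) by lra.
  rewrite (lor_sym X0 XY0) in XYx. rewrite (lor_sym X0 YY0) in XYy.
  rewrite (lor_sym X0 XX0), (lor_sym Y0 XY0) in XXx. rewrite (lor_sym X0 XY0), (lor_sym Y0 YY0) in XXy.
  assert (rXYY : lor XY0 Y0 = lor XX0 X0) by lra.
  assert (rYYY : lor YY0 Y0 = lor XY0 X0) by lra.
  assert (rXXY : lor XX0 Y0 = - lor XY0 X0) by lra.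
  assert (rYYX : lor YY0 X0 = - lor XX0 X0) by lra.
  assert (rYY : lor Y0 Y0 = lam) by lra.
  assert (rX1 : lor X0 n1 = 0) by (rewrite lor_sym; auto).
  assert (rX2 : lor X0 n2 = 0) by (rewrite lor_sym; auto).
  assert (rY1 : lor Y0 n1 = 0) by (rewrite lor_sym; auto).
  assert (rY2 : lor Y0 n2 = 0) by (rewrite lor_sym; auto).
  assert (rF1 : lor F0 n1 = 0) by (rewrite lor_sym; auto).
  assert (rF2 : lor F0 n2 = 0) by (rewrite lor_sym; auto).
  assert (rcons : lor YY0 n2 = - (lor XX0 n1 + lor XX0 n2 + lor YY0 n1)).
  { assert (E : lor Hv (vadd XX0 YY0) = 0) by (rewrite Del; lorsimp; rewrite HvHv, HvF; ring).
    rewrite hvW in E. apply Rmult_integral in E. destruct E as [E|E]; [tauto|].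
    lorsimp_in E. lra. }
  clear DX DY Del.
  refine (conj _ (conj _ (conj _ (conj rHxn2 rHyn2)))); [ | | (intros Ha Hb; apply injective_projections; cbn [fst snd czero]; [rewrite QR|rewrite QI];
     lorsimp_in Ha; lorsimp_in Hb; lorsimp; rewrite ?(lor_sym XYY XXX), ?(lor_sym XXY XXX), ?(lor_sym YYY XXX), ?(lor_sym Hx XXX), ?(lor_sym Hy XXX), ?(lor_sym Hv XXX), ?(lor_sym XX0 XXX), ?(lor_sym XY0 XXX), ?(lor_sym YY0 XXX), ?(lor_sym X0 XXX), ?(lor_sym Y0 XXX), ?(lor_sym F0 XXX);
  rewrite ?(lor_sym n1 XXX), ?(lor_sym n2 XXX), ?(lor_sym XXY XYY), ?(lor_sym YYY XYY), ?(lor_sym Hx XYY), ?(lor_sym Hy XYY), ?(lor_sym Hv XYY), ?(lor_sym XX0 XYY), ?(lor_sym XY0 XYY), ?(lor_sym YY0 XYY), ?(lor_sym X0 XYY), ?(lor_sym Y0 XYY);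
  rewrite ?(lor_sym F0 XYY), ?(lor_sym n1 XYY), ?(lor_sym n2 XYY), ?(lor_sym YYY XXY), ?(lor_sym Hx XXY), ?(lor_sym Hy XXY), ?(lor_sym Hv XXY), ?(lor_sym XX0 XXY), ?(lor_sym XY0 XXY), ?(lor_sym YY0 XXY), ?(lor_sym X0 XXY), ?(lor_sym Y0 XXY);
  rewrite ?(lor_sym F0 XXY), ?(lor_sym n1 XXY), ?(lor_sym n2 XXY), ?(lor_sym Hx YYY), ?(lor_sym Hy YYY), ?(lor_sym Hv YYY), ?(lor_sym XX0 YYY), ?(lor_sym XY0 YYY), ?(lor_sym YY0 YYY), ?(lor_sym X0 YYY), ?(lor_sym Y0 YYY), ?(lor_sym F0 YYY);
  rewrite ?(lor_sym n1 YYY), ?(lor_sym n2 YYY), ?(lor_sym Hy Hx), ?(lor_sym Hv Hx), ?(lor_sym XX0 Hx), ?(lor_sym XY0 Hx), ?(lor_sym YY0 Hx), ?(lor_sym X0 Hx), ?(lor_sym Y0 Hx), ?(lor_sym F0 Hx), ?(lor_sym n1 Hx), ?(lor_sym n2 Hx);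
  rewrite ?(lor_sym Hv Hy), ?(lor_sym XX0 Hy), ?(lor_sym XY0 Hy), ?(lor_sym YY0 Hy), ?(lor_sym X0 Hy), ?(lor_sym Y0 Hy), ?(lor_sym F0 Hy), ?(lor_sym n1 Hy), ?(lor_sym n2 Hy), ?(lor_sym XX0 Hv), ?(lor_sym XY0 Hv), ?(lor_sym YY0 Hv);
  rewrite ?(lor_sym X0 Hv), ?(lor_sym Y0 Hv), ?(lor_sym F0 Hv), ?(lor_sym n1 Hv), ?(lor_sym n2 Hv), ?(lor_sym XY0 XX0), ?(lor_sym YY0 XX0), ?(lor_sym X0 XX0), ?(lor_sym Y0 XX0), ?(lor_sym F0 XX0), ?(lor_sym n1 XX0), ?(lor_sym n2 XX0);
  rewrite ?(lor_sym YY0 XY0), ?(lor_sym X0 XY0), ?(lor_sym Y0 XY0), ?(lor_sym F0 XY0), ?(lor_sym n1 XY0), ?(lor_sym n2 XY0), ?(lor_sym X0 YY0), ?(lor_sym Y0 YY0), ?(lor_sym F0 YY0), ?(lor_sym n1 YY0), ?(lor_sym n2 YY0), ?(lor_sym Y0 X0);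
  rewrite ?(lor_sym F0 X0), ?(lor_sym n1 X0), ?(lor_sym n2 X0), ?(lor_sym F0 Y0), ?(lor_sym n1 Y0), ?(lor_sym n2 Y0), ?(lor_sym n1 F0), ?(lor_sym n2 F0), ?(lor_sym n2 n1);
     rewrite ?(CP XX0 XX0), ?(CP XX0 YY0), ?(CP YY0 YY0), ?(CP XY0 XY0), ?(CP XX0 XY0), ?(CP XY0 YY0);
     rewrite ?rXXF, ?rXYF, ?rYYF, ?rXYY, ?rYYY, ?rXXY, ?rYYX, ?rYY, ?rX1, ?rX2, ?rY1, ?rY2, ?rF1, ?rF2, ?g11, ?g22, ?g12, ?cXY, ?gXF, ?gYF;
     rewrite ?rcons; rewrite ?rcons in Ha;
     assert (Ea : lor XX0 n2 = - lor XX0 n1) by lra; assert (Eb : lor XY0 n2 = - lor XY0 n1) by lra;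
     rewrite ?Ea, ?Eb; field; auto) ];
  f_equal; lorsimp;
  rewrite ?(lor_sym XYY XXX), ?(lor_sym XXY XXX), ?(lor_sym YYY XXX), ?(lor_sym Hx XXX), ?(lor_sym Hy XXX), ?(lor_sym Hv XXX), ?(lor_sym XX0 XXX), ?(lor_sym XY0 XXX), ?(lor_sym YY0 XXX), ?(lor_sym X0 XXX), ?(lor_sym Y0 XXX), ?(lor_sym F0 XXX);
  rewrite ?(lor_sym n1 XXX), ?(lor_sym n2 XXX), ?(lor_sym XXY XYY), ?(lor_sym YYY XYY), ?(lor_sym Hx XYY), ?(lor_sym Hy XYY), ?(lor_sym Hv XYY), ?(lor_sym XX0 XYY), ?(lor_sym XY0 XYY), ?(lor_sym YY0 XYY), ?(lor_sym X0 XYY), ?(lor_sym Y0 XYY);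
  rewrite ?(lor_sym F0 XYY), ?(lor_sym n1 XYY), ?(lor_sym n2 XYY), ?(lor_sym YYY XXY), ?(lor_sym Hx XXY), ?(lor_sym Hy XXY), ?(lor_sym Hv XXY), ?(lor_sym XX0 XXY), ?(lor_sym XY0 XXY), ?(lor_sym YY0 XXY), ?(lor_sym X0 XXY), ?(lor_sym Y0 XXY);
  rewrite ?(lor_sym F0 XXY), ?(lor_sym n1 XXY), ?(lor_sym n2 XXY), ?(lor_sym Hx YYY), ?(lor_sym Hy YYY), ?(lor_sym Hv YYY), ?(lor_sym XX0 YYY), ?(lor_sym XY0 YYY), ?(lor_sym YY0 YYY), ?(lor_sym X0 YYY), ?(lor_sym Y0 YYY), ?(lor_sym F0 YYY);
  rewrite ?(lor_sym n1 YYY), ?(lor_sym n2 YYY), ?(lor_sym Hy Hx), ?(lor_sym Hv Hx), ?(lor_sym XX0 Hx), ?(lor_sym XY0 Hx), ?(lor_sym YY0 Hx), ?(lor_sym X0 Hx), ?(lor_sym Y0 Hx), ?(lor_sym F0 Hx), ?(lor_sym n1 Hx), ?(lor_sym n2 Hx);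
  rewrite ?(lor_sym Hv Hy), ?(lor_sym XX0 Hy), ?(lor_sym XY0 Hy), ?(lor_sym YY0 Hy), ?(lor_sym X0 Hy), ?(lor_sym Y0 Hy), ?(lor_sym F0 Hy), ?(lor_sym n1 Hy), ?(lor_sym n2 Hy), ?(lor_sym XX0 Hv), ?(lor_sym XY0 Hv), ?(lor_sym YY0 Hv);
  rewrite ?(lor_sym X0 Hv), ?(lor_sym Y0 Hv), ?(lor_sym F0 Hv), ?(lor_sym n1 Hv), ?(lor_sym n2 Hv), ?(lor_sym XY0 XX0), ?(lor_sym YY0 XX0), ?(lor_sym X0 XX0), ?(lor_sym Y0 XX0), ?(lor_sym F0 XX0), ?(lor_sym n1 XX0), ?(lor_sym n2 XX0);
  rewrite ?(lor_sym YY0 XY0), ?(lor_sym X0 XY0), ?(lor_sym Y0 XY0), ?(lor_sym F0 XY0), ?(lor_sym n1 XY0), ?(lor_sym n2 XY0), ?(lor_sym X0 YY0), ?(lor_sym Y0 YY0), ?(lor_sym F0 YY0), ?(lor_sym n1 YY0), ?(lor_sym n2 YY0), ?(lor_sym Y0 X0);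
  rewrite ?(lor_sym F0 X0), ?(lor_sym n1 X0), ?(lor_sym n2 X0), ?(lor_sym F0 Y0), ?(lor_sym n1 Y0), ?(lor_sym n2 Y0), ?(lor_sym n1 F0), ?(lor_sym n2 F0), ?(lor_sym n2 n1);
  rewrite ?TX, ?TY; lorsimp;
  rewrite ?(lor_sym XYY XXX), ?(lor_sym XXY XXX), ?(lor_sym YYY XXX), ?(lor_sym Hx XXX), ?(lor_sym Hy XXX), ?(lor_sym Hv XXX), ?(lor_sym XX0 XXX), ?(lor_sym XY0 XXX), ?(lor_sym YY0 XXX), ?(lor_sym X0 XXX), ?(lor_sym Y0 XXX), ?(lor_sym F0 XXX);
  rewrite ?(lor_sym n1 XXX), ?(lor_sym n2 XXX), ?(lor_sym XXY XYY), ?(lor_sym YYY XYY), ?(lor_sym Hx XYY), ?(lor_sym Hy XYY), ?(lor_sym Hv XYY), ?(lor_sym XX0 XYY), ?(lor_sym XY0 XYY), ?(lor_sym YY0 XYY), ?(lor_sym X0 XYY), ?(lor_sym Y0 XYY);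
  rewrite ?(lor_sym F0 XYY), ?(lor_sym n1 XYY), ?(lor_sym n2 XYY), ?(lor_sym YYY XXY), ?(lor_sym Hx XXY), ?(lor_sym Hy XXY), ?(lor_sym Hv XXY), ?(lor_sym XX0 XXY), ?(lor_sym XY0 XXY), ?(lor_sym YY0 XXY), ?(lor_sym X0 XXY), ?(lor_sym Y0 XXY);
  rewrite ?(lor_sym F0 XXY), ?(lor_sym n1 XXY), ?(lor_sym n2 XXY), ?(lor_sym Hx YYY), ?(lor_sym Hy YYY), ?(lor_sym Hv YYY), ?(lor_sym XX0 YYY), ?(lor_sym XY0 YYY), ?(lor_sym YY0 YYY), ?(lor_sym X0 YYY), ?(lor_sym Y0 YYY), ?(lor_sym F0 YYY);
  rewrite ?(lor_sym n1 YYY), ?(lor_sym n2 YYY), ?(lor_sym Hy Hx), ?(lor_sym Hv Hx), ?(lor_sym XX0 Hx), ?(lor_sym XY0 Hx), ?(lor_sym YY0 Hx), ?(lor_sym X0 Hx), ?(lor_sym Y0 Hx), ?(lor_sym F0 Hx), ?(lor_sym n1 Hx), ?(lor_sym n2 Hx);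
  rewrite ?(lor_sym Hv Hy), ?(lor_sym XX0 Hy), ?(lor_sym XY0 Hy), ?(lor_sym YY0 Hy), ?(lor_sym X0 Hy), ?(lor_sym Y0 Hy), ?(lor_sym F0 Hy), ?(lor_sym n1 Hy), ?(lor_sym n2 Hy), ?(lor_sym XX0 Hv), ?(lor_sym XY0 Hv), ?(lor_sym YY0 Hv);
  rewrite ?(lor_sym X0 Hv), ?(lor_sym Y0 Hv), ?(lor_sym F0 Hv), ?(lor_sym n1 Hv), ?(lor_sym n2 Hv), ?(lor_sym XY0 XX0), ?(lor_sym YY0 XX0), ?(lor_sym X0 XX0), ?(lor_sym Y0 XX0), ?(lor_sym F0 XX0), ?(lor_sym n1 XX0), ?(lor_sym n2 XX0);
  rewrite ?(lor_sym YY0 XY0), ?(lor_sym X0 XY0), ?(lor_sym Y0 XY0), ?(lor_sym F0 XY0), ?(lor_sym n1 XY0), ?(lor_sym n2 XY0), ?(lor_sym X0 YY0), ?(lor_sym Y0 YY0), ?(lor_sym F0 YY0), ?(lor_sym n1 YY0), ?(lor_sym n2 YY0), ?(lor_sym Y0 X0);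
  rewrite ?(lor_sym F0 X0), ?(lor_sym n1 X0), ?(lor_sym n2 X0), ?(lor_sym F0 Y0), ?(lor_sym n1 Y0), ?(lor_sym n2 Y0), ?(lor_sym n1 F0), ?(lor_sym n2 F0), ?(lor_sym n2 n1);
  rewrite ?HvHv, ?rHxHv, ?rHyHv, ?hvW; lorsimp;
  rewrite ?(lor_sym XYY XXX), ?(lor_sym XXY XXX), ?(lor_sym YYY XXX), ?(lor_sym Hx XXX), ?(lor_sym Hy XXX), ?(lor_sym Hv XXX), ?(lor_sym XX0 XXX), ?(lor_sym XY0 XXX), ?(lor_sym YY0 XXX), ?(lor_sym X0 XXX), ?(lor_sym Y0 XXX), ?(lor_sym F0 XXX);
  rewrite ?(lor_sym n1 XXX), ?(lor_sym n2 XXX), ?(lor_sym XXY XYY), ?(lor_sym YYY XYY), ?(lor_sym Hx XYY), ?(lor_sym Hy XYY), ?(lor_sym Hv XYY), ?(lor_sym XX0 XYY), ?(lor_sym XY0 XYY), ?(lor_sym YY0 XYY), ?(lor_sym X0 XYY), ?(lor_sym Y0 XYY);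
  rewrite ?(lor_sym F0 XYY), ?(lor_sym n1 XYY), ?(lor_sym n2 XYY), ?(lor_sym YYY XXY), ?(lor_sym Hx XXY), ?(lor_sym Hy XXY), ?(lor_sym Hv XXY), ?(lor_sym XX0 XXY), ?(lor_sym XY0 XXY), ?(lor_sym YY0 XXY), ?(lor_sym X0 XXY), ?(lor_sym Y0 XXY);
  rewrite ?(lor_sym F0 XXY), ?(lor_sym n1 XXY), ?(lor_sym n2 XXY), ?(lor_sym Hx YYY), ?(lor_sym Hy YYY), ?(lor_sym Hv YYY), ?(lor_sym XX0 YYY), ?(lor_sym XY0 YYY), ?(lor_sym YY0 YYY), ?(lor_sym X0 YYY), ?(lor_sym Y0 YYY), ?(lor_sym F0 YYY);
  rewrite ?(lor_sym n1 YYY), ?(lor_sym n2 YYY), ?(lor_sym Hy Hx), ?(lor_sym Hv Hx), ?(lor_sym XX0 Hx), ?(lor_sym XY0 Hx), ?(lor_sym YY0 Hx), ?(lor_sym X0 Hx), ?(lor_sym Y0 Hx), ?(lor_sym F0 Hx), ?(lor_sym n1 Hx), ?(lor_sym n2 Hx);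
  rewrite ?(lor_sym Hv Hy), ?(lor_sym XX0 Hy), ?(lor_sym XY0 Hy), ?(lor_sym YY0 Hy), ?(lor_sym X0 Hy), ?(lor_sym Y0 Hy), ?(lor_sym F0 Hy), ?(lor_sym n1 Hy), ?(lor_sym n2 Hy), ?(lor_sym XX0 Hv), ?(lor_sym XY0 Hv), ?(lor_sym YY0 Hv);
  rewrite ?(lor_sym X0 Hv), ?(lor_sym Y0 Hv), ?(lor_sym F0 Hv), ?(lor_sym n1 Hv), ?(lor_sym n2 Hv), ?(lor_sym XY0 XX0), ?(lor_sym YY0 XX0), ?(lor_sym X0 XX0), ?(lor_sym Y0 XX0), ?(lor_sym F0 XX0), ?(lor_sym n1 XX0), ?(lor_sym n2 XX0);
  rewrite ?(lor_sym YY0 XY0), ?(lor_sym X0 XY0), ?(lor_sym Y0 XY0), ?(lor_sym F0 XY0), ?(lor_sym n1 XY0), ?(lor_sym n2 XY0), ?(lor_sym X0 YY0), ?(lor_sym Y0 YY0), ?(lor_sym F0 YY0), ?(lor_sym n1 YY0), ?(lor_sym n2 YY0), ?(lor_sym Y0 X0);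
  rewrite ?(lor_sym F0 X0), ?(lor_sym n1 X0), ?(lor_sym n2 X0), ?(lor_sym F0 Y0), ?(lor_sym n1 Y0), ?(lor_sym n2 Y0), ?(lor_sym n1 F0), ?(lor_sym n2 F0), ?(lor_sym n2 n1);
  rewrite ?(CP Hx XX0), ?(CP Hx YY0), ?(CP Hx XY0), ?(CP Hy XX0), ?(CP Hy YY0), ?(CP Hy XY0);
  rewrite ?rHxF, ?rHyF, ?rHxX, ?rHxY, ?rHyX, ?rHyY, ?rHxn2, ?rHyn2;
  rewrite ?rXXF, ?rXYF, ?rYYF, ?rXYY, ?rYYY, ?rXXY, ?rYYX, ?rYY, ?rX1, ?rX2, ?rY1, ?rY2, ?rF1, ?rF2, ?g11, ?g22, ?g12, ?cXY, ?gXF, ?gYF;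
  rewrite ?rcons, ?eU.
  all: field; auto.
Qed.


Lemma solveA p1 p2 al be : (al <> 0 \/ be <> 0) ->
  p1 * al - 2 * p2 * be = 0 -> p2 * al + 2 * p1 * be = 0 -> p1 = 0 /\ p2 = 0.
Proof.
  intros Hn E1 E2. assert (K : 0 < al * al + 4 * (be * be)) by (destruct Hn; nra).
  assert (P1 : p1 * (al * al + 4 * (be * be)) = 0) by (replace (p1 * (al * al + 4 * (be * be))) with (al * (p1 * al - 2 * p2 * be) + 2 * be * (p2 * al + 2 * p1 * be)) by ring; rewrite E1, E2; ring).
  assert (P2 : p2 * (al * al + 4 * (be * be)) = 0) by (replace (p2 * (al * al + 4 * (be * be))) with (-2 * be * (p1 * al - 2 * p2 * be) + al * (p2 * al + 2 * p1 * be)) by ring; rewrite E1, E2; ring).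
  apply Rmult_integral in P1; apply Rmult_integral in P2. split; [destruct P1|destruct P2]; auto; lra.
Qed.
Lemma solveB p1 p2 al be : (al <> 0 \/ be <> 0) ->
  p1 * al + 2 * p2 * be = 0 -> p2 * al - 2 * p1 * be = 0 -> p1 = 0 /\ p2 = 0.
Proof.
  intros Hn E1 E2. assert (K : 0 < al * al + 4 * (be * be)) by (destruct Hn; nra).
  assert (P1 : p1 * (al * al + 4 * (be * be)) = 0) by (replace (p1 * (al * al + 4 * (be * be))) with (al * (p1 * al + 2 * p2 * be) - 2 * be * (p2 * al - 2 * p1 * be)) by ring; rewrite E1, E2; ring).
  assert (P2 : p2 * (al * al + 4 * (be * be)) = 0) by (replace (p2 * (al * al + 4 * (be * be))) with (2 * be * (p1 * al + 2 * p2 * be) + al * (p2 * al - 2 * p1 * be)) by ring; rewrite E1, E2; ring).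
  apply Rmult_integral in P1; apply Rmult_integral in P2. split; [destruct P1|destruct P2]; auto; lra.
Qed.

Lemma nproj_eq x y v : U x y -> lor v (N2 x y) = - lor v (N1 x y) ->
  (nproj (N1 x y) (N2 x y) v = vzero <-> lor v (N1 x y) = 0).
Proof.
  intros Hu E. unfold nproj. rewrite E. destruct (HN x y Hu) as (_&_&_&_&_&_&g11&g22&g12&_).
  split.
  - intros Z. assert (W : lor (vsub (vscal (lor v (N1 x y)) (N1 x y)) (vscal (- lor v (N1 x y)) (N2 x y))) (N1 x y) = 0)
      by (rewrite Z; apply lor_zerol).
    lorsimp_in W. rewrite g11, (lor_sym (N2 x y)), g12 in W. lra.
  - intros Z. rewrite Z. apply V5eq; simpl; ring.
Qed.

Lemma pointwise x y : U x y ->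
  (cdzbar (Qcoef f) x y = czero <-> lor (vpx H x y) (N1 x y) = 0 /\ lor (vpy H x y) (N1 x y) = 0) /\
  (cdzbar (delta_coef f N1 N2 h) x y = czero <-> lor (vpx H x y) (N1 x y) = 0 /\ lor (vpy H x y) (N1 x y) = 0) /\
  ((nproj (N1 x y) (N2 x y) (vpx H x y) = vzero /\ nproj (N1 x y) (N2 x y) (vpy H x y) = vzero) <->
     lor (vpx H x y) (N1 x y) = 0 /\ lor (vpy H x y) (N1 x y) = 0).
Proof.
  intros Hu. destruct (point x y Hu) as (ED & EQ & EZ & E2x & E2y).
  set (p1 := lor (vpx H x y) (N1 x y)) in *. set (p2 := lor (vpy H x y) (N1 x y)) in *.
  set (al := lor (vsub (fXX x y) (fYY x y)) (vadd (N1 x y) (N2 x y))) in *.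
  set (be := lor (fXY x y) (vadd (N1 x y) (N2 x y))) in *.
  assert (Hn : al <> 0 \/ be <> 0).
  { destruct (Req_dec al 0) as [Ha|Ha]; [|left; auto]. destruct (Req_dec be 0) as [Hb|Hb]; [|right; auto].
    exfalso. apply (HQ x y Hu). apply EZ; auto. }
  assert (ep := Hspace x y Hu).
  split; [|split].
  - rewrite EQ. unfold czero. split.
    + intros E. injection E as E1 E2. apply (solveA p1 p2 al be); auto.
      * apply Rmult_integral in E1 || idtac. nra.
      * nra.
    + intros [Z1 Z2]. rewrite Z1, Z2. f_equal; field.
  - rewrite ED. unfold czero. split.
    + intros E. injection E as E1 E2. apply (solveB p1 p2 al be); auto; lra.
    + intros [Z1 Z2]. rewrite Z1, Z2. f_equal; field.
  - rewrite (nproj_eq x y (vpx H x y)), (nproj_eq x y (vpy H x y)); auto. tauto.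
Qed.

Theorem main_sec :
  (holo_on U (Qcoef f) <-> holo_on U (delta_coef f N1 N2 h)) /\
  (holo_on U (delta_coef f N1 N2 h) <-> parallel_mean_curv U N1 N2 H).
Proof.
  assert (SQ1 := SF_smooth U HU _ sf_Qre). assert (SQ2 := SF_smooth U HU _ sf_Qim).
  assert (SD1 := SF_smooth U HU _ sf_Dre). assert (SD2 := SF_smooth U HU _ sf_Dim).
  unfold holo_on, parallel_mean_curv. split; split.
  - intros (_&_&Z). split; [auto|split; [auto|]]. intros x y Hu. apply (proj1 (proj2 (pointwise x y Hu))).
    apply (proj1 (pointwise x y Hu)). auto.
  - intros (_&_&Z). split; [auto|split; [auto|]]. intros x y Hu. apply (proj1 (pointwise x y Hu)).
    apply (proj1 (proj2 (pointwise x y Hu))). auto.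
  - intros (_&_&Z) x y Hu. apply (proj2 (proj2 (pointwise x y Hu))).
    apply (proj1 (proj2 (pointwise x y Hu))). auto.
  - intros P. split; [auto|split; [auto|]]. intros x y Hu. apply (proj1 (proj2 (pointwise x y Hu))).
    apply (proj2 (proj2 (pointwise x y Hu))). auto.
Qed.

End Main.

Theorem mainTheorem8
  (U : R -> R -> Prop) (f N1 N2 H : R -> R -> V5) (h : R -> R -> R)
  (HU : open2 U)
  (Hf : smoothV_on U f) (HN1 : smoothV_on U N1) (HN2 : smoothV_on U N2)
  (HS : forall x y, U x y -> lor (f x y) (f x y) = 1)
  (Hconf : forall x y, U x y -> clor (f_z f x y) (f_z f x y) = czero)
  (Hspace : forall x y, U x y -> 0 < e2u f x y)
  (HN : forall x y, U x y ->
     lor (N1 x y) (f x y) = 0 /\ lor (N1 x y) (vpx f x y) = 0 /\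
     lor (N1 x y) (vpy f x y) = 0 /\
     lor (N2 x y) (f x y) = 0 /\ lor (N2 x y) (vpx f x y) = 0 /\
     lor (N2 x y) (vpy f x y) = 0 /\
     lor (N1 x y) (N1 x y) = 1 /\ lor (N2 x y) (N2 x y) = -1 /\
     lor (N1 x y) (N2 x y) = 0 /\ lor (N2 x y) e4 < 0)
  (HH : forall x y, U x y ->
     f_zzbar f x y = cv_of (vadd (vscal (- e2u f x y) (f x y)) (vscal (e2u f x y) (H x y))))
  (Hmt : forall x y, U x y -> lor (H x y) (H x y) = 0)
  (Hh : forall x y, U x y -> H x y = vscal (h x y) (vadd (N1 x y) (N2 x y)))
  (HH0 : forall x y, U x y -> H x y <> vzero)
  (HQ : forall x y, U x y -> Qcoef f x y <> czero) :
  (holo_on U (Qcoef f) <-> holo_on U (delta_coef f N1 N2 h)) /\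
  (holo_on U (delta_coef f N1 N2 h) <-> parallel_mean_curv U N1 N2 H).
Proof.
  eapply main_sec; eauto.
Qed.
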